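(* For every $t \in \mathbb{N}_0$ and every integer $b \ge 3$, the cyclotomic polynomial $\Phi_b(x)$ does not divide \begin{align*} R_t(x) = {}& x^{8t+15} + x^{8t+14} + x^{8t+11} - x^{8t+10} - x^{8t+8} + 2x^{6t+9} - x^{4t+15} - x^{4t+11} - x^{4t+9} + 2x^{4t+8} \\ & - 2x^{4t+7} + x^{4t+6} + x^{4t+4} + x^{4t} - 2x^{2t+6} + x^7 + x^5 - x^4 - x - 1. \end{align*}
   Context: $\Phi_b(x) = \prod_\zeta (x-\zeta)$, where $\zeta$ ranges over the primitive $b$-th roots of unity, is the $b$-th cyclotomic polynomial. *)

(* Defs.v *)
From mathcomp Require Import all_boot all_order all_algebra all_field.
Set Implicit Arguments. Unset Strict Implicit. Unset Printing Implicit Defensive.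
Import GRing.Theory.
Local Open Scope ring_scope.

Definition Rpoly (t : nat) : {poly int} :=
  'X^(8*t+15) + 'X^(8*t+14) + 'X^(8*t+11) - 'X^(8*t+10) - 'X^(8*t+8)
  + 2%:P * 'X^(6*t+9) - 'X^(4*t+15) - 'X^(4*t+11) - 'X^(4*t+9)
  + 2%:P * 'X^(4*t+8) - 2%:P * 'X^(4*t+7) + 'X^(4*t+6) + 'X^(4*t+4)
  + 'X^(4*t) - 2%:P * 'X^(2*t+6) + 'X^7 + 'X^5 - 'X^4 - 'X - 1.

(* Main.v *)
Require Import Defs.
From Stdlib Require Import ZArith.
From mathcomp Require Import all_boot all_order all_algebra all_field.
From mathcomp Require Import ssrZ zify ring lra.
Set Implicit Arguments. Unset Strict Implicit. Unset Printing Implicit Defensive.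
Import GRing.Theory Num.Theory.
Local Open Scope ring_scope.

Section Gen.
Variables (C : Type) (cz : C) (cadd cmul : C -> C -> C) (cneg : C -> C).
Fixpoint padd (a b : list C) : list C :=
  match a, b with
  | nil, _ => b
  | _, nil => a
  | x :: a', y :: b' => cadd x y :: padd a' b'
  end.
Definition pscal (c : C) (l : list C) := List.map (cmul c) l.
Fixpoint pmul (a b : list C) : list C :=
  match a with
  | nil => nil
  | x :: a' => padd (pscal x b) (cz :: pmul a' b)
  end.
Definition pneg (l : list C) := List.map cneg l.
Fixpoint psubst (s : C) (k : nat) (l : list C) : list C :=
  match l with
  | nil => nil
  | c :: l' => c :: (nseq k.-1 cz ++ pscal s (psubst s k l'))
  end.

Variables (R : comNzRingType) (f : C -> R).
Fixpoint ev (l : list C) (x : R) : R :=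
  match l with nil => 0 | c :: l' => f c + x * ev l' x end.

Hypotheses (f0 : f cz = 0) (fadd : forall a b, f (cadd a b) = f a + f b)
  (fmul : forall a b, f (cmul a b) = f a * f b) (fneg : forall a, f (cneg a) = - f a).

Lemma ev_padd a b x : ev (padd a b) x = ev a x + ev b x.
Proof.
elim: a b => [|c a IH] [|d b] /=; rewrite ?add0r ?addr0 //.
by rewrite fadd IH mulrDr addrACA.
Qed.
Lemma ev_pscal c l x : ev (pscal c l) x = f c * ev l x.
Proof. by elim: l => [|d l IH] /=; rewrite ?mulr0 // fmul IH mulrDr mulrCA. Qed.
Lemma ev_pmul a b x : ev (pmul a b) x = ev a x * ev b x.
Proof.
elim: a => [|c a IH] /=; first by rewrite mul0r.
by rewrite ev_padd ev_pscal /= f0 add0r IH mulrDl mulrA.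
Qed.
Lemma ev_pneg l x : ev (pneg l) x = - ev l x.
Proof. by elim: l => [|c l IH] /=; rewrite ?oppr0 // fneg IH opprD mulrN. Qed.
Lemma ev_nseq n l x : ev (nseq n cz ++ l) x = x ^+ n * ev l x.
Proof. by elim: n => [|n IH] /=; rewrite ?mul1r // f0 add0r IH exprS mulrA. Qed.
Lemma ev_psubst s k l x : (0 < k)%N -> ev (psubst s k l) x = ev l (f s * x ^+ k).
Proof.
move=> k0; elim: l => [|c l IH] //=.
rewrite ev_nseq ev_pscal IH; congr (_ + _).
set e := ev l _; set k1 := k.-1.
have -> : k = k1.+1 by rewrite /k1 prednK.
by rewrite exprS; ring.
Qed.
Lemma ev_zero (zt : C -> bool) l x :
  (forall c, zt c -> f c = 0) -> all zt l -> ev l x = 0.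
Proof.
move=> H; elim: l => [|c l IH] //= /andP[/H -> /IH ->]; by rewrite mulr0 addr0.
Qed.
End Gen.

Lemma ev_map (C D : Type) (R : comNzRingType) (f : D -> R) (g : C -> D) l x :
  ev f (List.map g l) x = ev (fun c => f (g c)) l x.
Proof. by elim: l => //= c l ->. Qed.

Section Inst.
Variable R : comNzRingType.
Definition z2r (z : Z) : R := (int_of_Z z)%:~R.
Lemma z2rD (a b : Z) : z2r (Z.add a b) = z2r a + z2r b.
Proof. by rewrite /z2r -intrD; congr intmul; lia. Qed.
Lemma z2rM (a b : Z) : z2r (Z.mul a b) = z2r a * z2r b.
Proof. by rewrite /z2r -intrM; congr intmul; lia. Qed.
Lemma z2rN (a : Z) : z2r (Z.opp a) = - z2r a.
Proof. by rewrite /z2r -mulrNz; congr intmul; lia. Qed.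
Lemma z2r0 : z2r Z0 = 0. Proof. by []. Qed.
End Inst.

Lemma ev_ext (C : Type) (R : comNzRingType) (f g : C -> R) l x :
  (forall c, f c = g c) -> ev f l x = ev g l x.
Proof. by move=> H; elim: l => //= c l ->; rewrite H. Qed.
Arguments z2r {R} z.
Definition uadd := padd Z.add.
Definition umul := pmul Z0 Z.add Z.mul.
Definition uneg := pneg Z.opp.
Definition usubst (s : Z) (k : nat) (l : list Z) := psubst Z0 Z.mul s k l.
Definition uzero (l : list Z) := all (Z.eqb 0) l.
Definition badd := padd uadd.
Definition bmul := pmul [::] uadd umul.
Definition bneg := pneg uneg.
Definition bzero (l : list (list Z)) := all uzero l.
Definition bsubst (sx : Z) kx (sy : Z) ky (F : list (list Z)) :=
  psubst [::] umul [:: sy] ky (List.map (usubst sx kx) F).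
Fixpoint upow (l : list Z) (n : nat) := if n is n'.+1 then umul l (upow l n') else [:: Zpos xH].
Definition flat (k : nat) (F : list (list Z)) :=
  foldr (fun row acc => uadd row (nseq k Z0 ++ acc)) [::] F.

Section Ev.
Variable R : comNzRingType.
Definition ev1 (l : list Z) (x : R) := ev (@z2r R) l x.
Definition ev2 (l : list (list Z)) (x y : R) := ev (fun c => ev1 c x) l y.

Lemma ev1_add a b x : ev1 (uadd a b) x = ev1 a x + ev1 b x.
Proof. rewrite /ev1 /uadd ev_padd //; exact: z2rD. Qed.
Lemma ev1_mul a b x : ev1 (umul a b) x = ev1 a x * ev1 b x.
Proof. rewrite /ev1 /umul ev_pmul //; by move=> *; rewrite ?z2rD ?z2rM. Qed.
Lemma ev1_neg a x : ev1 (uneg a) x = - ev1 a x.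
Proof. rewrite /ev1 /uneg ev_pneg //; by move=> *; rewrite ?z2rN. Qed.
Lemma ev1_subst s k a x : (0 < k)%N -> ev1 (usubst s k a) x = ev1 a (z2r s * x ^+ k).
Proof. move=> k0; rewrite /ev1 /usubst ev_psubst //; by move=> *; rewrite ?z2rM. Qed.
Lemma ev1_zero a x : uzero a -> ev1 a x = 0.
Proof. apply: ev_zero => c /Z.eqb_spec <-; exact: z2r0. Qed.
Lemma ev1_pow a n x : ev1 (upow a n) x = ev1 a x ^+ n.
Proof.
elim: n => [|n IH] /=; last by rewrite ev1_mul IH exprS.
by rewrite /ev1 /= mulr0 addr0 /z2r /=.
Qed.

Lemma ev2_add a b x y : ev2 (badd a b) x y = ev2 a x y + ev2 b x y.
Proof. rewrite /ev2 /badd ev_padd //; move=> *; exact: ev1_add. Qed.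
Lemma ev2_mul a b x y : ev2 (bmul a b) x y = ev2 a x y * ev2 b x y.
Proof. rewrite /ev2 /bmul ev_pmul //; move=> *; by rewrite ?ev1_add ?ev1_mul. Qed.
Lemma ev2_neg a x y : ev2 (bneg a) x y = - ev2 a x y.
Proof. rewrite /ev2 /bneg ev_pneg //; move=> *; exact: ev1_neg. Qed.
Lemma ev2_zero a x y : bzero a -> ev2 a x y = 0.
Proof. move=> H; apply: (ev_zero (zt := uzero)) => // c; exact: ev1_zero. Qed.
Lemma ev2_subst sx kx sy ky F x y : (0 < kx)%N -> (0 < ky)%N ->
  ev2 (bsubst sx kx sy ky F) x y = ev2 F (z2r sx * x ^+ kx) (z2r sy * y ^+ ky).
Proof.
move=> kx0 ky0; rewrite /ev2 /bsubst.
rewrite (ev_psubst (f := fun c => ev1 c x)) //; last by move=> *; rewrite ev1_mul.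
rewrite ev_map {1}/ev1 /= mulr0 addr0; apply: ev_ext => c.
exact: ev1_subst.
Qed.
End Ev.
Section Data.
Local Open Scope Z_scope.
Definition Rd : list (list Z) :=
  [:: [:: -1; -1; 0; 0; -1; 1; 0; 1];
  [:: 0; 0; 0; 0; 0; 0; -2];
  [:: 1; 0; 0; 0; 1; 0; 1; -2; 2; -1; 0; -1; 0; 0; 0; -1];
  [:: 0; 0; 0; 0; 0; 0; 0; 0; 0; 2];
  [:: 0; 0; 0; 0; 0; 0; 0; 0; -1; 0; -1; 1; 0; 0; 1; 1]].

Definition A1 : list (list Z) :=
  [:: [:: 0; 0; 0; 0; 0; 0; 0; 0; 0; 0; 0; 0; 0; 0; 0; 0; 0; 0; 0; 0; 0; 0; 0; 0; 0; 0; 0; 0; 0; 0; 0; 0; 0; 0; 0; 0; 0; -1; 1; 3; 1; -2; -1; -2; -6; -25; -10; 45; 29; 43; 11; 95; -68; -100; -416; 209; -387; 526; -418; 1409; -500; 1347; -2506; 2137; -3943; 2906; -4854; 5991; -3744; 7930; -7393; 9622; -11608; 9038; -15240; 10325; -10266; 14394; -9820; 16072; -10987; 13237; -14300; -265; -4436; -1203; 7461; -12673; 20626; -13749; 33510; -52449; 48695; -55035; 73060; -92246; 82620; -72340; 106604; -123188; 89615; -72189; 99539; -107816; 54578; -31686; 86277; -81148; -5889; 25618; 22977; -6883; -87071; 75829; 21589; 5080; -81580; 53653; 20909; 15756; -87655; 9865; 81761; -48706; 14063; -72321; 129610; -74713; 31222; -90273; 115959; -68986; 39822; -71800; 77365;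 -15763; -17793; 339; -9414; 52506; -63560; 49193; -49112; 73925; -77637; 55638; -61014; 66245; -56799; 44611; -32507; 36505; -24129; 10190; -13904; 6239; -5987; -801; 4726; -461; 9818; -7315; 7130; -7938; 4361; -7595; 3991; -4109; 5334; -2637; 3621; -1768; 1468; -1583; 135; -960; 406; -264; 382; 102; 162; 81; -94; -46; -67; -16; -24; 26; 2; 33; -4; 4; -5; -1; -3; 0; -1; 1];
  [:: 0; 0; 0; 0; 0; 0; 0; 0; 0; 0; 0; 0; 0; 0; 0; 0; 0; 0; 0; 0; 0; 0; 0; 0; 0; 0; 0; 0; 0; 0; 0; 0; 0; 0; 0; 0; 0; 0; 0; 0; 0; 0; 2; -2; -4; -8; 6; 10; -2; 4; 30; 44; -48; -78; -122; 144; -294; 180; -234; 938; -504; 720; -1288; 2132; -2878; 2028; -3782; 5600; -4540; 5062; -6618; 10710; -10642; 7804; -14178; 15778; -12970; 9588; -13344; 22066; -12966; 7996; -16402; 19014; -5406; -10598; 50; 7890; 18384; -33254; 18352; -14542; 53468; -82082; 54036; -49338; 97330; -120088; 75918; -64156; 126060; -140914; 74600; -54566; 121656; -116336; 17190; -1474; 81964; -67550; -43908; 48322; 42172; -11462; -99668; 73148; 28748; 6282; -103458; 42760; 69298; -33236; -47904; -19808; 116874; -67448; 11874; -83884; 156206; -93714; 31148; -86224; 119080; -44956; -6832; -30766; 44570; 24300; -64786; 36116; -35742; 85108; -104038; 73180; -69790; 94300; -97728; 70944; -60648; 75500; -61884; 40708; -30682; 29840; -24580; 4418; -1476; 890; 8812;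 -13108; 18408; -15618; 16988; -21642; 17178; -18028; 16644; -15442; 14936; -10844; 11122; -9280; 7142; -6842; 4962; -4616; 3448; -2410; 2424; -1450; 1266; -970; 638; -618; 282; -274; 212; -92; 100; -44; 44; -32; 4; -16; 4; -2; 2; 0; 2];
  [:: 0; 0; 0; 0; 0; 0; 0; 0; 0; 0; 0; 0; 0; 0; 0; 0; 0; 0; 0; 0; 0; 0; 0; 0; 0; 0; 0; 0; 0; 0; 0; 0; 0; 0; 0; 0; 0; -1; 2; 1; 0; -2; -1; 2; -4; -19; 4; 38; -17; 48; -62; 171; -151; 38; -351; 487; -657; 742; -1122; 1895; -1452; 1694; -2603; 3546; -4237; 4080; -6575; 8113; -7159; 7099; -9032; 12315; -11297; 10925; -16498; 19314; -14497; 10580; -14060; 16966; -9091; 4089; -13892; 15743; -759; -11631; 6140; -4054; 27869; -39101; 18915; -13318; 41107; -57432; 36366; -34965; 78596; -91477; 54881; -49159; 93787; -107824; 69825; -69245; 129804; -145444; 93329; -88395; 143664; -148395; 79982; -65086; 135520; -136532; 57966; -48333; 109156; -103598; 17246; -9833; 82606; -72512; 5623; -17814; 91514; -94864; 31134; -41853; 110569; -113024; 66197; -71502; 131165; -136333; 83030; -78581; 117173; -109610; 53270; -35950; 65430; -52493; 442; 15090; 3820; 5375; -48565; 59449; -41206; 48737; -70845; 72051; -50112; 45773; -59351; 51101; -35646; 32307; -35410; 30042; -13653; 10554; -11944; 4931; -438; -1370; -832; -793; 5388; -3724; 3686; -4503; 4146; -3777; 1587; -1869; 2079; -823; 1226;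 -826; 675; -383; -227; -157; -124; 153; 22; 81; 15; 118; -106; 23; -86; 30; -16; 9; -2; 26; -4; 5; -6; 0; -1; -1; -1; 1];
  [:: 0; 0; 0; 0; 0; 0; 0; 0; 0; 0; 0; 0; 0; 0; 0; 0; 0; 0; 0; 0; 0; 0; 0; 0; 0; 0; 0; 0; 0; 0; 0; 0; 0; 0; 0; 0; 0; 0; 0; 0; 0; 0; 2; -2; -6; -4; 8; 10; -2; -10; 38; 40; -76; -76; -66; 152; -182; 12; -64; 870; -626; 406; -1092; 1976; -2166; 930; -2472; 5486; -4368; 3496; -6174; 10506; -9236; 4106; -10942; 18494; -13222; 8228; -15940; 28044; -17278; 1224; -18688; 32368; -13050; -7320; -9902; 36158; 4484; -40786; 3016; 24140; 23790; -75418; 21732; 25774; 62168; -119820; 35602; 19734; 80698; -158590; 37526; 23454; 135068; -211310; 63018; 14666; 159864; -237236; 39144; 18656; 210336; -274932; 46136; 20986; 212226; -244338; -28132; 50772; 211554; -228808; -21570; 25092; 212676; -171436; -80362; 27172; 206888; -171248; -19900; -39094; 229886; -150390; -15460; -53514; 189006; -127892; 8018; -71842; 159656; -68728; -31276; -6448; 48146; 15940; -83326; 45734; -22752; 79664; -113082; 90536; -75976; 101922; -115036; 84568; -69032; 79174; -70016; 50952; -35172; 35670; -30670; 10462; -5446; 1764; 5146; -11244; 16836; -14166; 16082; -19066; 16158; -16720; 15350; -15072; 14420; -11028; 10816; -8810; 6974; -6320; 4854; -4606; 3500; -2556; 2326; -1418; 1184; -886; 638; -620; 320; -274; 188; -86;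 88; -38; 46; -34; 6; -14; 2; -2; 2; 0; 2];
  [:: 0; 0; 0; 0; 0; 0; 0; 0; 0; 0; 0; 0; 0; 0; 0; 0; 0; 0; 0; 0; 0; 0; 0; 0; 0; 0; 0; 0; 0; 0; 0; 0; 0; 0; 0; 0; 0; 0; 0; 0; 0; 0; 0; 0; 0; 0; 0; 0; 0; 0; 0; 0; 0; 1; -1; -5; 3; 5; 0; -6; 3; 34; 5; -75; -20; 58; -45; -48; -132; 403; 104; -87; -259; 583; -447; -31; -1536; 1374; -114; 29; -289; 1981; 138; 241; -3364; 2272; -1498; -1825; -1290; 3975; -1030; 6409; -11243; 17368; -17090; 14836; -23500; 25800; -29507; 35815; -42755; 54042; -52251; 45410; -39388; 32963; -28812; 11941; -236; 5113; 3932; -34016; 62732; -73659; 88856; -132226; 154089; -134102; 136938; -166711; 180962; -160935; 156878; -196408; 189030; -144092; 131502; -142092; 129808; -82399; 82891; -114036; 91945; -58025; 59577; -79759; 68022; -41656; 64111; -86328; 72474; -59746; 68865; -79868; 63450; -52210; 62396; -63235; 45987; -32623; 29519; -21437; 6814; 2668; -1350; 5115; -13979; 17025; -18993; 20829; -23623; 23441; -18098; 17645; -15824; 13243; -12475; 9714; -9907; 6895; -4903; 4326; -2180; 2277; -1110; 1094; -980; 129; -339; -75; 89; -70; 167; 36; 79; -62; 25; -66; 15; -37; 11; -1; 10; -1; 4; -1; 1; -1];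
  [:: 0; 0; 0; 0; 0; 0; 0; 0; 0; 0; 0; 0; 0; 0; 0; 0; 0; 0; 0; 0; 0; 0; 0; 0; 0; 0; 0; 0; 0; 0; 0; 0; 0; 0; 0; 0; 0; 0; 0; 0; 0; 0; 0; 0; 0; 0; 0; 0; 0; 0; 0; 0; 0; 0; 0; 0; 0; 0; -2; 2; 8; 4; -20; -16; 24; 22; -42; -86; 124; 158; -40; -328; 228; 216; 46; -1090; 450; 728; 200; -1934; 912; 1352; 1046; -4568; 1414; 3534; 492; -6572; 172; 7700; 1098; -9958; -3844; 20468; -7984; -2112; -23572; 43924; -23788; 6800; -48830; 82356; -48330; 31396; -83230; 112370; -44996; 2762; -73604; 92888; 6620; -48062; -29518; 30338; 120618; -165414; 62540; -83564; 228222; -229724; 100716; -134792; 287190; -254800; 122372; -162740; 257540; -171726; 38454; -86052; 171348; -94378; 9554; -67964; 116124; -41854; -15096; -42274; 93158; -51472; 41466; -99888; 126594; -95188; 76222; -109420; 116936; -88052; 82996; -95752; 91112; -60964; 43728; -43234; 26186; -7172; -3354; 6592; -14724; 28502; -30748; 33742; -36524; 39170; -38888; 34312; -34370; 31074; -27642; 24576; -21146; 19584; -15430; 13168; -11002; 8400; -7062; 5080; -4396; 3330; -2342; 1932; -1260; 992; -648; 434; -386; 204; -148; 104; -52; 52; -12; 18; -10; 2; -4; 0; -2];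
  [:: 0; 0; 0; 0; 0; 0; 0; 0; 0; 0; 0; 0; 0; 0; 0; 0; 0; 0; 0; 0; 0; 0; 0; 0; 0; 0; 0; 0; 0; 0; 0; 0; 0; 0; 0; 0; 0; 0; 0; 0; 0; 0; 0; 0; 0; 0; 0; 0; 0; 0; 0; 0; 0; 1; -2; -1; 0; 3; -1; -4; 6; 21; -1; -41; 20; -32; 59; -221; 163; -75; 400; -557; 708; -612; 1278; -2013; 1520; -1844; 2559; -3742; 3470; -3314; 5923; -6761; 6199; -5105; 7309; -9128; 6240; -5755; 9068; -11697; 6009; -1901; 4264; -2827; -7262; 14442; -10423; 13221; -27303; 38370; -39058; 46869; -66626; 79371; -74663; 72016; -83494; 87119; -73929; 62098; -70364; 70582; -41773; 14820; -9832; -5154; 45167; -77171; 73575; -72296; 101831; -116230; 108408; -106978; 130243; -140754; 111605; -90049; 92930; -83330; 51723; -31127; 43748; -51036; 21852; -6476; 13008; -11711; -7110; 13302; 11695; -21337; 9626; -10470; 25593; -30584; 21538; -22743; 37932; -39307; 31612; -30238; 34581; -32670; 22235; -20880; 20959; -16898; 8932; -4187; 4223; 1202; -4896; 5610; -5877; 6055; -8593; 8153; -7225; 8107; -6362; 5638; -3953; 2871; -3250; 1716; -1900; 1370; -674; 590; 203; 61; 85; -199; -39; -146; 79; -132; 179; -54; 99; -40; 16; -33; 6; -31; 10; -5; 7; 1; 2; 0; 1; -1];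
  [:: 0; 0; 0; 0; 0; 0; 0; 0; 0; 0; 0; 0; 0; 0; 0; 0; 0; 0; 0; 0; 0; 0; 0; 0; 0; 0; 0; 0; 0; 0; 0; 0; 0; 0; 0; 0; 0; 0; 0; 0; 0; 0; 0; 0; 0; 0; 0; 0; 0; 0; 0; 0; 0; 0; 0; 0; 0; 0; -2; 2; 6; 4; -10; -8; 10; 12; -50; -56; 80; 92; 40; -198; 272; 86; 130; -1024; 632; -392; 1054; -2534; 2244; -802; 2876; -5556; 4350; -2534; 5710; -10562; 7782; -2158; 8776; -15476; 8872; -1260; 9732; -21426; 6446; 9446; 4892; -15486; -8682; 32460; -14284; -2002; -42262; 77376; -47908; 34094; -87870; 127616; -73996; 43344; -115776; 141640; -59546; 21364; -90960; 97176; 28416; -69594; -16300; 164; 125062; -144320; 52608; -76556; 200562; -183598; 81514; -102338; 175832; -124048; 21182; -44598; 109524; -53600; -26896; 9994; 19516; 28402; -80050; 43086; -224; 24586; -39404; 3284; 29414; -18942; 13674; -50740; 75968; -70938; 75232; -91964; 99966; -85540; 75166; -78462; 69506; -55566; 45040; -37668; 29740; -14150; 4622; 162; -10126; 15308; -20978; 22610; -22808; 26492; -23648; 24176; -23504; 21454; -20984; 17010; -15460; 13218; -10468; 9650; -7608; 6614; -5398; 3784; -3308; 2196; -1732; 1424; -946; 864; -502; 356; -270; 124; -130; 72; -52; 48; -8; 16; -4; 2; -4; 0; -2]].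

Definition B1 : list (list Z) :=
  [:: [:: 0; 0; 0; 0; 0; 0; 0; 0; 0; 0; 0; 0; 0; 0; 0; 0; 0; 0; 0; 0; 0; 0; 0; 0; 0; 0; 0; 0; 0; 0; 0; 0; 0; 0; 0; 0; 0; 1; -2; -1; 0; 3; -1; -2; 0; 24; -3; -35; 25; -35; 55; -214; 144; -113; 484; -781; 1089; -993; 1978; -2924; 2585; -3500; 4996; -7680; 7741; -8326; 13148; -14468; 14847; -14474; 20903; -26068; 21389; -23472; 30061; -34086; 23237; -18435; 30422; -29146; 10280; -1920; 16327; -7993; -26910; 41885; -26995; 41360; -93935; 105786; -81183; 94845; -150728; 159107; -109304; 127833; -199504; 186572; -113228; 107987; -173050; 128789; -25595; 64624; -151217; 110746; -8960; 52615; -133208; 42086; 52099; 25556; -108878; 46157; 9394; 83597; -130627; 19076; 38762; 26665; -63021; -4813; 29603; 39493; -47968; -22237; 48020; -7444; -2438; -39289; 43088; 7068; -20987; -1762; 1802; 30469; -41190; 21568; -26126; 48780; -52995; 37354; -36585; 46464; -44026; 31901; -28278; 32097; -26564; 17955; -16181; 18477; -16786; 12197; -10340; 10831; -7430; 5277; -5475; 5713; -5643; 3647; -3822; 3002; -1872; 1766; -1415; 1695; -1164; 879; -883; 455; -342; 239; -253; 251; -93; 129; -80; 28; -21; 9; -31; 8; -5; 7; -1; 1; 1; 1; -1];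
  [:: 0; 0; 0; 0; 0; 0; 0; 0; 0; 0; 0; 0; 0; 0; 0; 0; 0; 0; 0; 0; 0; 0; 0; 0; 0; 0; 0; 0; 0; 0; 0; 0; 0; 0; 0; 0; 0; 0; 0; 0; 0; 0; -2; 2; 6; 4; -8; -12; 4; 20; -40; -54; 60; 88; 80; -196; 130; 150; 198; -890; 452; -494; 1432; -2564; 1682; -1262; 4010; -6046; 5498; -5536; 11036; -14408; 10720; -10312; 18546; -24726; 19790; -19274; 36018; -40512; 26240; -22046; 39080; -48856; 21364; -21450; 52114; -50420; 10952; 11418; 28138; -18532; -49344; 56262; -12088; 24740; -123946; 146124; -75756; 117526; -231422; 228060; -139152; 176930; -311454; 267102; -145834; 201646; -307292; 226370; -94714; 170162; -271562; 155482; -27688; 103052; -159256; 37616; 43070; 64090; -134354; 28812; 10376; 92924; -132662; 60812; -52914; 161678; -203112; 147990; -165564; 237864; -247942; 195434; -185562; 224234; -198604; 146664; -135112; 139558; -110820; 60148; -41836; 32890; 910; -32614; 43466; -49408; 62686; -77778; 76592; -76862; 83444; -83600; 79846; -71758; 68060; -61812; 52628; -47482; 42228; -37402; 31156; -25518; 21608; -16680; 13302; -10784; 8752; -7076; 5066; -4008; 2860; -1970; 1478; -1062; 888; -560; 372; -276; 144; -102; 60; -52; 42; -10; 14; -4; 2; -2; 0; -2];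
  [:: 0; 0; 0; 0; 0; 0; 0; 0; 0; 0; 0; 0; 0; 0; 0; 0; 0; 0; 0; 0; 0; 0; 0; 0; 0; 0; 0; 0; 0; 0; 0; 0; 0; 0; 0; 0; 0; 0; 0; 0; 0; 0; 0; 0; 0; -1; 2; 0; 3; -3; -2; -3; 0; -6; 3; 9; -14; 89; -95; 184; -324; 390; -539; 762; -1325; 1736; -2211; 3312; -4358; 5366; -5948; 8007; -10547; 11888; -14505; 17484; -23098; 23923; -25187; 31460; -35145; 39157; -37531; 48174; -56117; 50789; -50044; 51041; -57459; 41704; -26296; 34098; -29358; 2013; 30574; -38993; 53483; -115976; 162735; -159926; 174616; -231999; 271907; -248206; 255273; -332624; 349962; -292006; 278796; -315741; 287100; -186977; 174242; -233109; 190958; -111730; 108876; -136447; 76930; 12534; 24353; -73355; 40055; -13621; 54386; -94957; 52352; -30083; 84457; -109773; 90325; -89120; 126229; -137102; 99232; -91776; 106222; -94605; 64926; -54666; 59331; -40401; 12833; -4152; 3109; 12463; -26515; 28120; -27767; 34092; -39711; 35471; -32051; 32996; -31716; 26820; -23453; 21502; -19408; 14691; -11813; 10914; -8124; 6619; -4900; 4156; -3220; 1792; -1716; 1159; -755; 577; -314; 360; -136; 40; -119; 7; -19; -2; -7; 23; 19; 4; -1; -4; 0; -2; -2; 0; 1];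
  [:: 0; 0; 0; 0; 0; 0; 0; 0; 0; 0; 0; 0; 0; 0; 0; 0; 0; 0; 0; 0; 0; 0; 0; 0; 0; 0; 0; 0; 0; 0; 0; 0; 0; 0; 0; 0; 0; 0; 0; 0; 0; 0; 0; 0; 0; 0; 0; 0; 0; 0; 2; -2; -4; -8; 4; 12; 8; -8; 32; 44; -28; -84; -196; 154; -200; 164; -408; 1148; -528; 1382; -2388; 2968; -3350; 3222; -6410; 7326; -6800; 9550; -13454; 16096; -14498; 16056; -24588; 25036; -21324; 26890; -36530; 38750; -27294; 30034; -44416; 33884; -15480; 17092; -29464; 13994; 28496; -31534; 20130; -61216; 109546; -111592; 88352; -130116; 197544; -171442; 141140; -189424; 235606; -184952; 116506; -167446; 202364; -117616; 69046; -125142; 148124; -46628; -11382; -56714; 64262; 14350; -21038; -58360; 67880; 5316; -128; -71492; 74520; -30532; 55664; -115242; 113686; -79372; 90260; -123924; 101044; -69090; 74106; -82334; 66666; -33400; 33720; -33298; 7548; 5794; -14512; 12272; -24392; 36892; -28708; 34560; -34354; 36812; -36018; 29196; -34072; 27912; -24472; 22206; -17512; 17994; -13134; 11862; -10920; 7290; -6776; 4494; -3838; 3396; -1946; 2230; -1312; 920; -774; 316; -482; 214; -164; 192; -40; 70; -12; 14; -34; -6; -14; 2; 0; 2; 2; 2]].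

Definition H1 : list Z :=
  [:: 2; 4; 6; 0; -18; -64; -138; -244; -316; -304; -130; 268; 788; 1400; 1480; 1008; -1092; -3652; -8240; -10864; -14742; -11780; -10636; 1208; 4392; 20564; 15322; 29880; 10806; 33224; 16078; 75004; 80212; 193452; 213370; 358304; 339054; 458620; 347130; 412100; 200192; 228068; -39942; -5044; -297084; -262520; -568294; -553052; -862308; -884188; -1119482; -1115368; -1173866; -1125516; -923056; -814676; -345680; -286320; 407930; 367288; 1206904; 927112; 1815832; 1296576; 2147842; 1298464; 2053586; 989684; 1654534; 354412; 907024; -445852; 48898; -1376964; -924252; -2204392; -1597046; -2727280; -1921864; -2727280; -1597046; -2204392; -924252; -1376964; 48898; -445852; 907024; 354412; 1654534; 989684; 2053586; 1298464; 2147842; 1296576; 1815832; 927112; 1206904; 367288; 407930; -286320; -345680; -814676; -923056; -1125516; -1173866; -1115368; -1119482; -884188; -862308; -553052; -568294; -262520; -297084; -5044; -39942; 228068; 200192; 412100; 347130; 458620; 339054; 358304; 213370; 193452; 80212; 75004; 16078; 33224; 10806; 29880; 15322; 20564; 4392; 1208; -10636; -11780; -14742; -10864; -8240; -3652; -1092; 1008; 1480; 1400; 788; 268; -130; -304; -316; -244; -138; -64; -18; 0; 6; 4; 2].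

Definition A2 : list (list Z) :=
  [:: [:: 0; 0; 0; 0; 0; 0; 0; 0; 0; 0; 0; 0; 0; 0; 0; 0; 0; 0; 0; 0; 0; 0; 0; -1; 0; 0; 0; 3; 0; 7; -2; 9; 0; 21; 9; 25; 14; 23; 10; 13; 24; -9; 21; -68; -39; -59; -78; -11; -9; 47; 54; -36; 42; -75; -91; -100; -87; 81; 3; 104; 122; 27; 55; -66; -27; -37; -35; 55; 0; 58; 24; 44; -8; -24; -7; -5; -4; -7; 8; -20; 0; -7; -1; -2; -2; -6; -2; 0; -1; 0; 0; 0; -1];
  [:: 0; 0; 0; 0; 0; 0; 0; 0; 0; 0; 0; 0; 0; 0; 0; 0; 0; 0; 0; 0; 0; 0; 0; 0; 0; 0; 0; 0; 0; 0; 0; -2; 2; 0; 0; 8; -8; 18; -20; 10; -12; 14; 4; -2; 22; -18; -10; -24; -28; 68; 0; 62; 80; 2; 60; -110; 52; -44; -36; 32; -10; 60; -4; -42; 34; -122; -26; -68; -58; -16; -68; 14; -76; 2; -18; 30; -4; 32; 18; 28; 22; 20; 32; 8; 14; 4; 12; 4; 12; 0; 4; 0; 0; 0; 2];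
  [:: 0; 0; 0; 0; 0; 0; 0; 0; 0; 0; 0; 0; 0; 0; 0; 0; 0; 0; 0; 0; 0; 0; 0; 0; 0; 0; 0; 0; 0; 0; 0; 1; 0; 1; 1; -4; 0; -12; -3; -11; -3; -9; -8; -16; -40; -18; -66; 10; -21; 43; 31; 46; 36; 13; -1; 5; 24; 19; 47; 16; 84; -37; 21; -47; -40; -8; -19; 37; 35; 18; 51; -31; 12; -37; -7; -1; -37; 24; -27; 8; -17; -1; -17; -1; -3; 0; 1; 1; -3; 0; 0; -1; 1];
  [:: 0; 0; 0; 0; 0; 0; 0; 0; 0; 0; 0; 0; 0; 0; 0; 0; 0; 0; 0; 0; 0; 0; 0; 0; 0; 0; 0; 0; 0; 0; 0; 0; 0; 0; 0; 0; 0; 0; 0; 2; 0; 2; 2; -12; 0; -38; -10; -26; -24; 28; -14; 54; -6; 0; 10; -32; 4; -8; 12; 50; -10; 30; 32; -24; 2; -56; 14; 20; -8; 68; 6; 36; 20; -18; 28; -38; 28; -22; -10; -12; -2; -2; -20; -8; -14; 4; -8; 8; -10; 0; -4; 0; 0; 2; -2]].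

Definition B2 : list (list Z) :=
  [:: [:: 0; 0; 0; 0; 0; 0; 0; 0; 0; 0; 0; 0; 0; 0; 0; 0; 0; 0; 0; 0; 0; 0; 0; 1; 0; 0; 0; -3; 0; -7; -2; -9; 0; -21; 9; -25; 14; -23; 10; -13; 24; 9; 21; 68; -39; 59; -78; 11; -9; -47; 54; 36; 42; 75; -91; 100; -87; -81; 3; -104; 122; -27; 55; 66; -27; 37; -35; -55; 0; -58; 24; -44; -8; 24; -7; 5; -4; 7; 8; 20; 0; 7; -1; 2; -2; 6; -2; 0; -1; 0; 0; 0; -1];
  [:: 0; 0; 0; 0; 0; 0; 0; 0; 0; 0; 0; 0; 0; 0; 0; 0; 0; 0; 0; 0; 0; 0; 0; 0; 0; 0; 0; 0; 0; 0; 0; 2; 2; 0; 0; -8; -8; -18; -20; -10; -12; -14; 4; 2; 22; 18; -10; 24; -28; -68; 0; -62; 80; -2; 60; 110; 52; 44; -36; -32; -10; -60; -4; 42; 34; 122; -26; 68; -58; 16; -68; -14; -76; -2; -18; -30; -4; -32; 18; -28; 22; -20; 32; -8; 14; -4; 12; -4; 12; 0; 4; 0; 0; 0; 2];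
  [:: 0; 0; 0; 0; 0; 0; 0; 0; 0; 0; 0; 0; 0; 0; 0; 0; 0; 0; 0; 0; 0; 0; 0; 0; 0; 0; 0; 0; 0; 0; 0; -1; 0; -1; 1; 4; 0; 12; -3; 11; -3; 9; -8; 16; -40; 18; -66; -10; -21; -43; 31; -46; 36; -13; -1; -5; 24; -19; 47; -16; 84; 37; 21; 47; -40; 8; -19; -37; 35; -18; 51; 31; 12; 37; -7; 1; -37; -24; -27; -8; -17; 1; -17; 1; -3; 0; 1; -1; -3; 0; 0; 1; 1];
  [:: 0; 0; 0; 0; 0; 0; 0; 0; 0; 0; 0; 0; 0; 0; 0; 0; 0; 0; 0; 0; 0; 0; 0; 0; 0; 0; 0; 0; 0; 0; 0; 0; 0; 0; 0; 0; 0; 0; 0; -2; 0; -2; 2; 12; 0; 38; -10; 26; -24; -28; -14; -54; -6; 0; 10; 32; 4; 8; 12; -50; -10; -30; 32; 24; 2; 56; 14; -20; -8; -68; 6; -36; 20; 18; 28; 38; 28; 22; -10; 12; -2; 2; -20; 8; -14; -4; -8; -8; -10; 0; -4; 0; 0; -2; -2]].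

Definition Ld : list Z :=
  [:: 2; 4; -2; -20; -50; -116; -228; -364; -510; -604; -460; -76; 272; 320; 234; 444; 966; 1280; 966; 444; 234; 320; 272; -76; -460; -604; -510; -364; -228; -116; -50; -20; -2; 4; 2].

Definition A3 : list (list Z) :=
  [:: [:: 0; 0; 0; 0; 0; 0; 0; 0; 0; 0; 0; 0; 0; 0; 0; 0; 0; 0; 0; 0; 0; 0; 0; 0; 0; 0; 0; 0; 0; 0; 0; 0; 0; 0; 0; 0; 0; -1; 0; 4; 4; 1; -3; -8; -8; -17; -34; 8; 13; 21; 1; 12; 10; 95; -106; 101; 20; 162; -129; -41; -360; 338; -554; 285; -378; 1003; -460; 754; -1357; 1907; -1692; 1529; -2657; 3152; -2345; 2428; -4912; 3233; -2422; 2842; -3163; 1270; 1943; 1095; 266; -4730; 3547; 362; 4053; -6461; 6143; -1151; 7747; -8601; -5812; 4391; -2389; -2689; -6920; -7961; 19979; -19300; 18571; -28310; 49866; -31054; 46174; -43285; 35360; 493; -33749; 32665; -76890; 75550; -77675; 56327; -58347; 56808; -21006; 26877; 173; -13390; 53849; -51683; 44702; -58630; 23085; -11184; -11738; -3425; -8977; 19472; 5901; -3366; -1438; 10932; 9109; -7243; -4016; -760; 8638; -4283; -10197; 123; 2469; 599; -2707; -1064; 4984; 2136; -2167; 736; -2102; 1961; -1607; 776; 19; -94; 565; 216; -315; -1129; 316; 276; 366; -775; 207; 226; -10; -431; 78; 184; 403; -144; 79; 79; -43; -139; -42; -54; 85; -32; -5; 17; -6; -10; 9; 4; 19; 6; -4;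 -3; -8; -8; -4; -1; 1; 1];
  [:: 0; 0; 0; 0; 0; 0; 0; 0; 0; 0; 0; 0; 0; 0; 0; 0; 0; 0; 0; 0; 0; 0; 0; 0; 0; 0; 0; 0; 0; 0; 0; 0; 0; 0; 0; 0; 0; 0; 0; 0; 0; 0; 2; -2; -6; -4; 4; 14; -4; 0; 30; 50; -44; -12; -84; 170; -144; 14; -170; 386; -368; 294; -696; 1018; -590; 542; -916; 1350; -1154; 904; -2242; 1836; -1068; 1676; -2520; 2666; -1660; 3824; -4316; 1932; -1780; 4512; -3774; -516; -2386; 5038; -596; -5042; 3310; -494; 14616; -16000; 9136; -11428; 16878; -17168; -1500; -11468; 14382; -2526; -4262; -4114; 12234; 14072; 5504; -19140; 24202; -4486; 13112; -28632; -16352; 14816; -14866; 5314; -38190; 41698; -15062; 53646; -59570; 47964; -11864; 22688; -12314; -38492; 30672; -20178; 17098; -46078; 19356; 892; 27164; -18212; -3204; 19694; 8968; 3100; -24482; 1924; 14726; -3984; -9332; -14716; 14376; 5284; -7054; -8750; 2448; 14160; -2012; -6256; -3070; 9190; 1412; -5288; -5290; 5292; 4678; -2914; -4014; 1850; 3096; -880; -3456; 310; 2966; -346; -1332; -438; 1278; 222; -836; -414; 882; 110; -198; -330; 142; 12; -100; -154; 148; 58; 8; -42; 24; -6; 2; -16; 20; 12; -2; -12; -2; -2; 2; 2; 4; 4; 2];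
  [:: 0; 0; 0; 0; 0; 0; 0; 0; 0; 0; 0; 0; 0; 0; 0; 0; 0; 0; 0; 0; 0; 0; 0; 0; 0; 0; 0; 0; 0; 0; 0; 0; 0; 0; 0; 0; 0; -1; 1; 3; 1; 0; -5; -2; 1; -12; -21; 17; -21; 31; -36; 23; 5; 56; -113; 201; -146; 188; -215; 139; -202; 314; -696; 732; -738; 1015; -1081; 1415; -1686; 2490; -2976; 3548; -3731; 3856; -4350; 4193; -5105; 4549; -5804; 5604; -5197; 4596; -2569; 2327; 131; 15; 1544; 2; 370; -1587; 3707; -7295; 5734; -11387; 11725; -15541; 18488; -26600; 42201; -46091; 51171; -45798; 39565; -22790; 4383; 4475; -15321; 20819; -37729; 43263; -54054; 58930; -49399; 37170; -5315; -3957; 18112; -15006; -2067; 11754; -31800; 24210; -30050; 21115; -14878; 18715; -13569; 15365; 7997; -12914; 32153; -43765; 45818; -38631; 16571; -19269; 4128; -2321; -1899; -563; 1419; 11018; -8766; 10139; -4783; 4009; 1470; -6365; 5361; -3632; -796; 107; -2826; 3096; -2606; 3283; -1067; 2298; -1485; 1525; -1028; -728; -753; 670; 545; -1562; 318; 393; 603; -1241; -236; 685; 913; -986; 76; 199; 458; -371; -360; 243; 446; -279; 9; -28; 90; -34; -137; -3; 104; -37; 8; 3; 0; 10; -10; -1; 14; -4; -6; -2; -5; -4; -4; -2; 1; 1];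
  [:: 0; 0; 0; 0; 0; 0; 0; 0; 0; 0; 0; 0; 0; 0; 0; 0; 0; 0; 0; 0; 0; 0; 0; 0; 0; 0; 0; 0; 0; 0; 0; 0; 0; 0; 0; 0; 0; 0; 0; 0; 0; 0; 2; -2; -6; -4; 4; 12; 2; 0; 24; 48; -56; 8; -84; 164; -168; 96; -280; 554; -612; 542; -858; 1362; -1084; 1162; -1700; 2246; -2174; 1540; -2916; 3054; -2680; 3030; -4214; 4910; -3612; 4874; -5682; 5230; -4226; 6330; -6522; 2774; -4068; 4358; -1806; -4256; 6086; -4798; 17668; -23334; 22920; -22248; 27590; -31390; 15704; -15518; 15788; -12644; -5984; 5774; 6382; 278; 5804; -13302; 35622; -17852; 11226; -18584; 2828; 14636; -32214; 23562; -49700; 73518; -69836; 63328; -65504; 56394; -14126; 206; -1412; -13944; 35904; -34690; 24184; -49938; 56572; -26964; 8562; -8230; -7564; 36154; -26656; -2148; -1520; 12356; 10802; -17498; 1848; 1348; 21560; -26566; 4152; -9880; 15048; 3072; -21334; 9142; -1196; 11490; -9026; -5854; 6038; 9654; -2208; -5616; -2150; 6676; 1274; -6994; -3274; 4952; 3166; -1942; -4282; 2236; 3676; -1936; -2122; 372; 2514; -34; -1774; -268; 1350; -418; -388; -400; 738; 208; -390; -166; 224; -136; -12; -124; 124; 90; -40; -36; 48; -18; 14; -10; 10; 12; -4; -12; 0; -4; 0; 2; 4; 4; 2];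
  [:: 0; 0; 0; 0; 0; 0; 0; 0; 0; 0; 0; 0; 0; 0; 0; 0; 0; 0; 0; 0; 0; 0; 0; 0; 0; 0; 0; 0; 0; 0; 0; 0; 0; 0; 0; 0; 0; 0; 0; 0; 0; 0; 0; 0; 0; 0; 0; 0; 0; 0; 0; 0; 0; 1; 0; -2; -6; -6; 1; 5; 13; 14; 32; 29; 52; -18; 83; -61; 90; -171; 72; -268; 143; -651; 402; -561; 788; -855; 956; -709; 2109; -1969; 2433; -2810; 4158; -4614; 4276; -7039; 7415; -9540; 9092; -11454; 11162; -9017; 9966; -7787; 8495; -2619; 3577; 3679; -11915; 20799; -27445; 30369; -43334; 39114; -42037; 40725; -47213; 40307; -28051; 26082; -8689; -4903; 22853; -15402; 22440; -28455; 26939; -32011; 37259; -55585; 44160; -42706; 34311; -20678; 10695; -4698; 12161; -2108; 3453; 437; -10569; 24721; -26897; 20783; -26873; 20586; -9604; 1685; -6311; 3143; 9189; -7217; 2796; -4811; 7779; -2080; -5831; 2055; 616; 1184; -1829; 336; 1542; 687; -1249; 1834; -262; -492; -667; 1346; -881; -634; -1212; 1443; 92; -646; -214; 983; 138; -2; -564; 301; 147; -190; -184; 43; -8; 28; -97; 14; 31; 1; 16; 29; 12; 2; -12; -1; 4; -1; 2; 5; 5; 2; -1; -1];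
  [:: 0; 0; 0; 0; 0; 0; 0; 0; 0; 0; 0; 0; 0; 0; 0; 0; 0; 0; 0; 0; 0; 0; 0; 0; 0; 0; 0; 0; 0; 0; 0; 0; 0; 0; 0; 0; 0; 0; 0; 0; 0; 0; 0; 0; 0; 0; 0; 0; 0; 0; 0; 0; 0; 0; 0; 0; 0; 0; -2; 2; 2; 8; 6; -4; 0; -18; -30; -64; -10; -110; 162; -238; 324; -386; 648; -698; 1138; -1498; 2100; -2264; 2622; -3478; 3550; -4040; 4494; -5216; 5634; -3852; 5202; -5276; 5410; -4292; 5090; -8002; 3362; -3908; 3510; -6438; 326; -960; 5164; 3754; -5722; 11984; -8988; 29398; -35818; 34986; -56558; 70290; -78766; 58734; -74038; 62950; -24210; -2198; 19714; -38678; 103500; -103504; 107310; -118488; 122598; -87534; 31908; -40428; -5072; 41322; -61512; 45482; -54890; 78266; -33424; 19592; -12868; 8476; 31284; -30630; -6; -12772; 12410; 7102; -29790; 2314; 5408; 16104; -7716; -12346; 9228; 13872; -98; -12762; -608; 8312; 5146; -10390; -6432; 6710; 4120; -3172; -5880; 2144; 5556; -990; -4336; 1222; 2038; 1096; -2488; -378; 1690; 382; -1166; -28; 214; 536; -428; -240; 242; 186; -206; -18; -2; 76; -26; -22; 20; 36; -30; -16; 0; 6; -4; -4; -2; 2; -2; -4; -2];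
  [:: 0; 0; 0; 0; 0; 0; 0; 0; 0; 0; 0; 0; 0; 0; 0; 0; 0; 0; 0; 0; 0; 0; 0; 0; 0; 0; 0; 0; 0; 0; 0; 0; 0; 0; 0; 0; 0; 0; 0; 0; 0; 0; 0; 0; 0; 0; 0; 0; 0; 0; 0; 0; 0; 1; -1; -3; -1; 1; 4; 0; -3; 8; 26; -12; 26; -20; 54; -23; 42; -112; 139; -240; 156; -265; 221; -339; 363; -516; 802; -705; 905; -933; 1392; -1443; 2231; -2917; 3197; -4247; 4558; -5562; 5024; -6614; 6890; -6320; 6661; -5799; 4932; -264; -477; 4878; -8164; 12274; -15053; 18287; -24962; 23636; -28818; 26945; -24607; 15633; -9527; 6818; 4587; -4162; 5083; -3935; 13220; -13593; 10090; -14966; 11742; -9002; 2074; -13365; 19378; -23747; 37328; -35982; 28246; -9537; 4004; 4022; -17417; 10581; -7720; 9422; -19869; 20483; -18136; 25563; -16135; 2424; 10419; -9529; 9575; -11998; 3256; 479; -4245; 872; -1083; 1825; 351; 1517; 102; 392; -185; -316; 1209; -1644; -335; 1027; 90; -981; -847; 1386; 137; -764; -416; 1344; 555; -999; -807; 1141; 137; -464; -541; 520; 589; -450; -460; 261; 84; -16; -194; 23; 208; -24; -89; 39; -2; 13; -1; -6; 22; -5; -20; 2; 1; -2; 1; 2; 5; 3; -1; -1];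
  [:: 0; 0; 0; 0; 0; 0; 0; 0; 0; 0; 0; 0; 0; 0; 0; 0; 0; 0; 0; 0; 0; 0; 0; 0; 0; 0; 0; 0; 0; 0; 0; 0; 0; 0; 0; 0; 0; 0; 0; 0; 0; 0; 0; 0; 0; 0; 0; 0; 0; 0; 0; 0; 0; 0; 0; 0; 0; 0; -2; 2; 6; 4; -6; -10; 2; 6; -20; -58; 44; -24; 68; -206; 188; -168; 446; -654; 818; -784; 1278; -1708; 1700; -2014; 2556; -3062; 2816; -2784; 3412; -3136; 2672; -2632; 3190; -1682; 970; -2052; 1306; 20; -786; -3244; 132; 2846; 582; -2394; -1064; 6860; -512; 5674; -16588; 21500; -19920; 28620; -42540; 34404; -37244; 41122; -38500; 13332; -258; -2890; 36434; -56148; 60312; -53572; 74300; -71558; 43842; -35694; 29644; -6040; -37450; 30808; -32108; 46270; -45076; 18338; -692; 21342; -1382; -16674; 13754; -2372; 16352; -25204; -6976; 13690; -6842; 9496; -27600; 11326; 13726; -1418; -1828; -8940; 14360; 7312; -8692; -10370; 3210; 7276; -348; -9762; -1974; 9572; 2566; -5892; -4136; 4050; 5710; -3252; -4680; 2666; 3054; -710; -3410; -22; 2684; -24; -1628; 276; 854; 438; -1016; -308; 566; 66; -266; 30; 112; 188; -154; -110; 86; 28; -30; 8; -10; 14; -18; -24; 4; 8; 0; 6; 4; 2; -2; -4; -2]].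

Definition B3 : list (list Z) :=
  [:: [:: 0; 0; 0; 0; 0; 0; 0; 0; 0; 0; 0; 0; 0; 0; 0; 0; 0; 0; 0; 0; 0; 0; 0; 0; 0; 0; 0; 0; 0; 0; 0; 0; 0; 0; 0; 0; 0; 1; -1; -3; -1; 1; 4; 0; -5; 11; 29; -12; 35; -26; 47; -47; 17; -122; 177; -351; 261; -267; 320; -444; 294; -361; 1035; -849; 628; -236; 1008; -940; 323; -1301; 2112; -3073; 1973; -3899; 5989; -7371; 7282; -9139; 13696; -11051; 11498; -9536; 10217; -987; -5123; 3993; -15004; 21978; -30403; 29647; -51924; 62684; -54045; 52400; -51265; 36013; 13744; -19928; 28477; -60487; 94167; -90084; 72799; -101381; 71247; -4279; -52405; 65307; -95593; 134055; -85681; 34537; -10896; 6717; 40681; -67985; 48816; -73376; 101513; -104736; 59141; -41194; 11213; 54863; -81242; 74120; -53988; 62971; -29394; -2090; -6656; 16645; -3847; -17765; -3110; -1019; 20352; -19967; 15; 3321; 13641; -4631; -6209; -702; 11152; -3244; -6126; 12; 4465; 1810; -5519; -269; 3540; 758; -2524; -679; 1691; 1238; -2440; -125; 564; 652; -725; -497; 504; 653; -548; -62; 19; 168; -18; -172; 19; 122; -49; 5; 23; 15; 22; -7; 6; 15; -8; -11; -3; -4; -3; -4; -2; 1; 1];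
  [:: 0; 0; 0; 0; 0; 0; 0; 0; 0; 0; 0; 0; 0; 0; 0; 0; 0; 0; 0; 0; 0; 0; 0; 0; 0; 0; 0; 0; 0; 0; 0; 0; 0; 0; 0; 0; 0; 0; 0; 0; 0; 0; -2; 2; 6; 4; -4; -12; -4; 8; -26; -56; 46; -22; 98; -166; 174; -60; 456; -720; 936; -1000; 1512; -2166; 1864; -2586; 3658; -4976; 4982; -5238; 6930; -6468; 6296; -6086; 7892; -6716; 3926; -4544; 1988; -426; -4356; 1512; -3634; 9468; -7100; 8252; -7208; 17368; -8504; 6794; -13976; 13262; -8774; 744; -23818; 20750; -23720; 37570; -56854; 57790; -35580; 52856; -40844; 19048; 5202; -8742; 30656; -92062; 105594; -114440; 121720; -126078; 85180; -32106; 30292; -6708; -23202; 40300; -37694; 55312; -93926; 75182; -53758; 43030; -19262; -22854; 42154; -16286; 16030; -18418; -6312; 25226; -5964; -8822; -12466; 14650; 8328; -5796; -18066; 8904; 15524; -6468; -9656; -4824; 17868; -1470; -10480; -4038; 10396; 2970; -5326; -6026; 6762; 4060; -4566; -2510; 1060; 3776; -1554; -2626; 1084; 1912; -818; -460; -552; 1210; -86; -642; -58; 386; -206; 30; -226; 186; 56; -48; -24; 82; -32; 12; -28; 6; 2; -10; -12; 6; 0; 2; 2; 4; 4; 2];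
  [:: 0; 0; 0; 0; 0; 0; 0; 0; 0; 0; 0; 0; 0; 0; 0; 0; 0; 0; 0; 0; 0; 0; 0; 0; 0; 0; 0; 0; 0; 0; 0; 0; 0; 0; 0; 0; 0; 0; 0; 0; 0; 0; 0; 0; 0; -1; 1; 2; 3; 2; -7; -6; 0; 0; -15; -7; -52; 71; -67; 44; -129; 227; -129; 413; -582; 786; -691; 935; -1456; 1490; -1898; 2283; -3598; 3480; -3652; 4653; -5351; 6091; -5098; 8207; -8247; 8110; -8298; 8923; -8915; 3728; -7467; 4757; -2897; -1651; 169; -5217; 21625; -18806; 25117; -28504; 42857; -34771; 34835; -56270; 53878; -51135; 37018; -45989; 16942; 5272; -5674; 14136; -25915; 53836; -40910; 74165; -96168; 92993; -76676; 59481; -60071; 6097; 5545; -2475; 8177; -29222; 38928; -18117; 41017; -48880; 30486; -6268; 11981; -18750; -5203; 1333; 13036; -13446; -5603; 6154; 6413; 7039; -11904; 2087; 5171; 4572; -8676; -2064; -46; 6592; -2904; -5223; 1387; 3545; 729; -3374; -503; 2535; 1989; -2557; -703; 473; 1506; -1150; -717; 158; 1140; -356; -322; -133; 516; -82; -114; -100; 249; 23; -80; -91; 27; -31; -19; -25; 11; 5; -13; -9; 8; 3; 2; 5; 7; 6; 1; -2; -1];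
  [:: 0; 0; 0; 0; 0; 0; 0; 0; 0; 0; 0; 0; 0; 0; 0; 0; 0; 0; 0; 0; 0; 0; 0; 0; 0; 0; 0; 0; 0; 0; 0; 0; 0; 0; 0; 0; 0; 0; 0; 0; 0; 0; 0; 0; 0; 0; 0; 0; 0; 0; 2; -2; -4; -8; 0; 14; 8; 8; 20; 58; -28; 24; -204; 214; -292; 276; -618; 814; -884; 1250; -1846; 2290; -2030; 2694; -3246; 3460; -3104; 3050; -4348; 2806; -2242; 2600; -2754; 2202; 242; 2198; -642; -994; 640; 1228; -882; -2918; -2596; 566; 2292; -6622; 2544; -8272; 26808; -26634; 35170; -43796; 59434; -47022; 33798; -39240; 22012; 632; -27020; 27534; -57230; 82904; -83644; 75658; -69172; 68630; -22932; 11058; 150; -12100; 35912; -45168; 28374; -49968; 39466; -23090; -1266; -3290; -2488; 24288; -4954; -5852; 10382; 7914; 8116; -13426; -8642; 6036; 2882; -11204; -9506; 4174; 9570; 1766; -10094; 4322; 8114; 2446; -6686; -2992; 5692; 3360; -5598; -3296; 2556; 2056; -1688; -3210; 2048; 2028; -510; -1314; 364; 812; -46; -1126; 384; 476; 80; -176; 28; 114; 78; -258; 2; 62; 6; -32; -8; -10; 18; -16; 6; 24; 16; 4; 2; -4; -6; -8; -6; -2]].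

Definition H3 : list Z :=
  [:: 2; 4; 10; 4; -12; -76; -174; -356; -556; -800; -958; -908; -614; 624; 2140; 6312; 10076; 20188; 26966; 47616; 56426; 94168; 100562; 165488; 159324; 267460; 229758; 406732; 305016; 590004; 372372; 823832; 412212; 1114348; 396800; 1467252; 289208; 1885104; 41380; 2367344; -400150; 2911532; -1088752; 3510836; -2063598; 4151508; -3333462; 4806364; -4843418; 5447016; -6438716; 6039204; -7851442; 6537908; -8716128; 6849796; -8653036; 6812088; -7361986; 6200932; -4755136; 4786108; -1019446; 2464320; 3377712; -615196; 7789486; -3960352; 11534782; -6841400; 14032548; -8513116; 14910184; -8513116; 14032548; -6841400; 11534782; -3960352; 7789486; -615196; 3377712; 2464320; -1019446; 4786108; -4755136; 6200932; -7361986; 6812088; -8653036; 6849796; -8716128; 6537908; -7851442; 6039204; -6438716; 5447016; -4843418; 4806364; -3333462; 4151508; -2063598; 3510836; -1088752; 2911532; -400150; 2367344; 41380; 1885104; 289208; 1467252; 396800; 1114348; 412212; 823832; 372372; 590004; 305016; 406732; 229758; 267460; 159324; 165488; 100562; 94168; 56426; 47616; 26966; 20188; 10076; 6312; 2140; 624; -614; -908; -958; -800; -556; -356; -174; -76; -12; 4; 10; 4; 2].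

Definition U1 : list Z :=
  [:: 2; -2; -2; -2; 3; -2; 0; 3; 2; 2; 3; 2; 1; 3; 1; 1; -1; -2; 3; 3; -3; 3; 0; -2; -2; -1; -2; 0; 3; -2; -3; 1; -2; 3; -3; -2; 2; 1; 0; 3; 2; -3; -3; 0; 0; -1; 2; 2; 1; 2; -1; 3; 2; 2; -1; 2; 2; -2; 3; -3; -3; 3; 0; -1; -2; -1; 0; -1; -3; -1; -3; -1; 3; 3; 0; -2; 0; -1; 0; -2; 1; -2; 3; 3; 1; -3; -2; 1; -1; -2; -2; 0; 0; -2; -3; 1; 1; 2; 3; 0; -2; 2; 1; 1; 2; 0; 3; -1; -2; 0; -2; 3; -2; -1; 3; 2; 3; 3; 1; -2; 2; -3; -3; 3; 0; 1; -1; 0; -2; -2; 2; -3; -2; 0; -2; 0; -2; -3; -2; -2; 3; 2; 2; 3; 1; 2; -2; 0; 1; 3; 2; 0; 0; 1; 0; 0; 0; -2; 0; -1; 2; 2; 1; 3; 1; -2; -2; 2; -3; 3; 3; -2; 0; 2; 3; -3; 0; 2; 3; 2; 0; 1; 3; -2; -3; 2; -2; 2; -1; 0; 3; -3; 1; 3; -3; -1; 3; -2; 0; -3; 1; 1; 0; -2; 0; 1; -2; 1; 1; -2; 0; -2; -3; 3; -1; 2; 0; 2; 2; -3; 0; 1; 3; 1; 2; -3; 0; 3; 1; 0; 1; -1; -2; 3; 2; -2; 2; 0; -3; 3; -3; 2; 2; 0; 0; 3; 1; 0; -1; 0; 2; 3; 1; 1; -3; 3; -3; -3; -2; 0; -2;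 -3; 0; -1; 2; -2; 1; 2; -1; -1; 1; -1; 3; -1; 3; 2; -2; -2; -2; 0; 1; 1; -3; -1; 0; -1; -3; -1; 1; -1; 3; 1; 1; 2; 2; 2; 2; 3; -2; 2; 0; -3; 1; 0; -3; 0; 3; 1; 0; 0; 2; 2].

Definition V1 : list Z :=
  [:: 2; -2; 3; 2; -1; 1; 2; -2; -3; 2; -2; -2; -1; 3; 0; -2; -2; 0; -3; -3; -3; 2; 2; -1; 2; 3; 3; -1; 3; 1; 1; -2; 3; -1; -1; 3; 0; 2; 0; -1; -2; 2; -2; 3; 1; 1; 3; 0; -2; 3; -3; -3; -1; 1; 3; 0; 1; -2; 0; -3; 1; 3; -2; 2; -1; -2; 1; 1; -2; 1; -1; 0; -1; 2; -2; 3; 1; 3; -3; 1; -3; 0; -2; 3; 3; 0; -2; -1; 3; -1; 1; 0; -2; 1; -2; 3; -1; 1; 0; 1; -3; 1; 1; -3; 2; -2; 1; 2; 3; 3; 3; -2; 1; -3; 1; -1; 2; -2; -2; 3; 0; 3; -3; -1; 1; -1; -1; 0; -2; 2; 3; 3; 1; -3; -2; 1; -3; 1; 2; -3; -3; 2; -3; -3; -1; -1; 0; 2; 3; 1; -1; 0; -1; 1; 1; -2].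

Definition W1 : list Z :=
  [:: 1; 0; 2; -4; -4; -14; -12; -6; 26; 100; 146; 234; 110; 36; -542; -856; -1718; -1446; -1514; 652; 2004; 6116; 6748; 9542; 4246; 2850; -10720; -12348; -29486; -19020; -32936; -2528; -21208; 20440; -25820; 12888; -76628; -30034; -136452; -31594; -101912; 107412; 104288; 408342; 432094; 742098; 720184; 947476; 837922; 928068; 763662; 729198; 552006; 348642; 167614; -247358; -448730; -1155610; -1317070; -2201204; -2153382; -3105878; -2644786; -3428044; -2436826; -3086240; -1592592; -2011522; -120240; -511178; 1604082; 1349854; 3473362; 3010440; 4818416; 4258844; 5504868; 4455446; 4955642; 3820202; 3607548; 2098424; 1232964; -18674; -1321284; -2624816; -4070030; -4554130; -5825238; -5914548; -6730850; -5633548; -6096590; -4789222; -4836492; -2605558; -2666516; -733314; -677414; 1880884; 1413920; 3142890; 2505592; 4608098; 3206136; 4357116; 2983970; 4715894; 2734376; 3659524; 1984378; 3482752; 1329026; 2139630; 664508; 2056808; 301946; 1199310; 141220; 1129488; -594048; -149600; -1501320; -1307640; -3261688; -2817316; -4157254; -3832222; -5433410; -3953100; -5011614; -3971714; -5011384; -2279370; -2820294; -1240280; -1499080; 1936048; 1652058; 2787578; 2714726; 5501114; 4812242; 4224174; 3797424; 5057184; 3458590; 1036530; 151486; 390712; -1395408; -4398670; -4407304; -3691738; -4361384; -6700680; -5133942; -3598552; -2779724; -4724426; -1502304; 390874; 2395976; 200486; 4150022; 5258416; 7158344; 3380520; 6812762; 6444716; 7443346; 2295436; 5022130; 3927128;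 4515960; -1086716; 1736140; 1078566; 1807120; -3155758; -199218; -15092; 480246; -3858722; -1191256; -119970; -422606; -3746020; -2138710; -477524; -2445554; -5329538; -5201482; -2995616; -6201904; -7331804; -7588254; -3543970; -6921796; -5713078; -6014006; -286866; -4103622; -567038; -1470754; 5534102; 876712; 5555128; 3471006; 9976494; 3947896; 8125444; 4592592; 9186776; 2469138; 4735830; 1228538; 3025546; -2283960; -1922518; -3105550; -3342252; -4942506; -6084382; -3319624; -5694466; -3099624; -6078696; 169116; -4295714; 1707110; -2919290; 5828194; -651716; 7015172; 661894; 9416324; 1159530; 8090050; 939472; 8288254; -72324; 5213768; -732206; 4188338; -2273534; 276724; -2698528; -692052; -3637438; -3865484; -2664172; -3851332; -2581354; -6095238; -800204; -5107680; -147172; -6199342; 2114074; -4501236; 2675500; -5401464; 3827884; -4137208; 3110614; -5142302; 3104838; -3959292; 2015522; -4548624; 1413528; -3188836; 178764; -3134090; -587448; -1236540; -980774; -167794; -1219560; 2250214; -998922; 3640664; -1325884; 5539524; -925132; 6409382; -1404068; 7226640; -1368216; 6690412; -2837886; 5491234; -3467474; 3647206; -4860820; 2134962; -4435520; 1007536; -4528364; 149140; -2867936; -161952; -1745312; 1088; 1166698; 1016762; 3100964; 1677456; 5846754; 2192676; 6291238; 1327474; 6782928; 117358; 4624842; -2555484; 2962182; -4935050; -556870; -7755328; -2291274; -8905920; -4596750; -9540600; -4130972; -8010858; -3763952; -5871682; -818814; -2064254; 1392294; 1347778; 4778088; 4666836; 5930636; 6101862; 6601542; 6228270; 4583950; 4479980;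 2250944; 1984768; -1394328; -982794; -4188452; -3365512; -6605568; -4696472; -7082002; -4460144; -6089164; -2671650; -3464316; 54190; -258650; 3058612; 2776220; 5326354; 4969878; 6532844; 5681862; 6129338; 5044640; 4471546; 2983852; 1775364; 521868; -1016694; -2050062; -3404902; -3677546; -4776986; -4503712; -5009924; -3930710; -4080054; -2630406; -2303232; -553612; -323884; 1138460; 1285638; 2419108; 2064398; 2616020; 2146042; 2390626; 1626022; 1503244; 829972; 606682; -158044; -518538; -981658; -1164844; -1429452; -1472904; -1329882; -1119900; -861908; -643430; -285216; -73928; 148136; 200076; 345044; 321574; 321362; 191304; 154298; 22894; -57742; -199458; -251148; -342324; -381524; -442986; -433264; -424396; -368874; -302696; -191566; -74040; 48556; 154538; 241214; 296030; 312240; 298158; 260026; 211214; 158010; 110644; 75074; 50818; 37542; 28966; 25458; 20254; 15936; 8170; 2120; -4530; -7916; -10100; -9384; -7712; -4988; -2628; -734; 396; 820; 824; 494; 208; -52; -154; -198; -158; -108; -54; -22; -6; 2; 2; 2].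

Definition Ua : list Z :=
  [:: 2; -1; -3; -3; 1; 1; 1; 1; 0; -2; 3; 2; -2; 3; -2; -2; 2; -2; 1; 0; -2; -2; 1; 1; 0; 1; -1; -3; 3; -1; -3; 0; -1; -3].

Definition Va : list Z :=
  [:: 2; 1; -3; 3; 1; -1; 1; -1; 0; 2; 3; -2; -2; -3; -2; 2; 2; 2; 1; 0; -2; 2; 1; -1; 0; -1; -1; 3; 3; 1; -3; 0; -1; 3].

Definition Wa : list Z :=
  [:: 1; 0; -4; 0; -24; 0; -36; 0; 88; 0; 540; 0; 752; 0; -664; 0; -340; 0; -1040; 0; -1896; 0; 700; 0; 496; 0; 1196; 0; 2224; 0; 432; 0; -944; 0; -560; 0; -744; 0; -644; 0; 1364; 0; 264; 0; -268; 0; -592; 0; -1772; 0; -1484; 0; -528; 0; 112; 0; 652; 0; 868; 0; 420; 0; 116; 0; 16; 0; -4].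

Definition Ub : list Z :=
  [:: -1; 0; -1; -2; 0; -2; -3; -1; -1; 2; -3; -3; -3; 3; -3; 2; 3; -3; 3; -2; 2; -3; -2; 1; -3; -1; 0; 3; 0; 3; 0; 2; -3; -2; 3; 3; -1; 0; 0; 0; -2; 2; -3; 1; -3; 1; -2; 0; -3; -2; 1; -3; -3; -3; -3; 1; 3; 3; 0; -1; 3; -3; 3; -3; -2; 2; 1; 1].

Definition Vb : list Z :=
  [:: -2; 2; 3; -2; 3; 0; 3; 1; -2; 0; -3; 1; 1; 1; -3; 0; 3; -1; 3; -3; 3; 2; 3; 1; -2; 3; -3; 1; 2; -2; 3; 2; -3; -1].

Definition Wb : list Z :=
  [:: -1; 0; 2; 0; 6; 20; 36; 88; 164; 206; 254; 412; 522; 346; 244; 502; 436; -292; -612; -40; 24; -768; -1222; -1404; -1386; -672; -354; -1044; -1224; -56; 1332; 896; -164; 780; 1398; 22; -430; -56; -464; -610; -768; -810; -464; -344; 446; 930; 14; 568; 2246; 992; -790; 558; 1810; 632; -610; -490; 276; 742; 160; -402; -256; -378; 82; -192; -2430; -2450; -282; -524; -1844; -1750; -930; 116; 524; 574; 1198; 976; 352; 972; 1170; 444; 122; -94; -488; -222; 322; 132; -244; 28; 424; 270; -74; -170; -132; -128; -108; -58; -30; -14; 0; 2].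

Definition U3 : list Z :=
  [:: 0; 0; -3; 0; -1; 0; 3; 1; -2; 0; 2; 2; 3; 1; -1; -1; -3; 0; 3; 2; 0; -3; 3; -3; 1; -2; 2; 3; 3; -1; 3; -3; 2; 3; -3; -3; 3; 2; 3; 2; -3; -2; -2; -2; -1; -1; -3; 1; -2; 0; 1; -1; 2; 1; 0; 0; 3; 2; 3; -1; -3; 2; -2; 3; -2; 0; -2; 3; 2; -3; 1; 1; -2; -1; 1; -3; -2; -2; 2; 3; 0; 0; -3; -3; -1; -2; -2; -1; 2; 1; -1; -1; -2; -3; -3; 0; -2; -3; 2; -2; 0; 2; 0; -3; 3; 0; 1; 1; -2; 3; 1; 0; -2; -1; -2; -2; 2; 3; 3; 0; 3; -3; 3; -2; -1; 3; 1; -3; -1; -2; -2; 1; -3; 1; 3; 3; 3; 3; 1; -2; 1; -2; 2; 1; -1; -1; 1; -2; -3; -1; 0; 1; 0; -3; -1; 1; 0; -3; -3; 0; -3; 2; -1; -1; 1; 3; 3; -3; 2; 1; 3; 2; 2; 3; -2; -3; -1; 2; 0; 1; -1; -3; 1; 1; 0; -3; 0; -3; -2; 1; -3; 3; 3; -1; -1; 1; -2; 3; -2; -1; 2; -1; 1; 3; -3; -3; 2; 2; -3; 3; -3; 1; 3; 1; 3; 0; 3; -2; 1; -2; 0; 0; 0; -2; 1; 2; 1; -1; -1; -3; 0; 2; 3; -3; -2; -1; 0; -1; 2; 1; -2; -1; -3; 1; 3; -2; -3; 1; -2; -2; 3; 1; 0; 2; 2; -3; 2; -1; 1; -3; 3;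 3; -1; 1; 3; -1; 0; -2; 2; 0; -2; 3; 0; 2; -3; -2; -2; -1; 2; 2; 2; -2; 1; 0; 0; -1; -3; -1].

Definition V3 : list Z :=
  [:: -3; 0; -3; -1; -3; -1; 1; 3; -2; -3; 3; -1; -3; 3; 1; -1; 1; 0; -1; 1; 0; -2; -2; 3; 0; -1; 1; 2; 3; 1; -2; -2; 0; 1; -3; -2; 2; 1; 3; 0; -1; 1; 3; 2; -1; -2; 2; 1; -2; -2; -1; 2; 1; 2; -3; 2; 1; -3; -2; -2; -1; -1; -1; 1; 3; -2; 0; 2; -2; 1; 2; -3; 0; -3; 3; -2; -1; -1; 1; 3; 1; -1; 1; 1; 2; 0; 1; 3; 0; -1; 3; 3; 0; 2; 1; -1; 1; -1; 1; -2; 3; 3; -2; -2; 2; -1; -1; 1; 0; 2; -2; -2; 0; -3; 3; -2; 2; 0; 3; 1; 1; -2; 0; 1; -1; -3; 2; 3; -3; -2; -2; 3; -3; 0; 3; 1; -1; -2; -1; 0; 1; 0; -2; 1].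

Definition W3 : list Z :=
  [:: -1; 0; 0; -2; -8; -2; 4; 34; 82; 162; 234; 368; 454; 340; 58; -474; -1106; -3264; -5398; -9746; -12114; -21126; -24800; -39394; -38010; -62434; -53994; -92396; -62150; -124132; -58756; -160590; -36762; -198000; 28920; -238082; 115400; -286648; 309992; -331612; 504218; -404180; 919856; -457148; 1251982; -580204; 1965254; -644444; 2381664; -842822; 3343872; -899772; 3547420; -1176812; 4391694; -1142674; 3717386; -1365314; 3792344; -870224; 1524932; -475692; 494584; 1360320; -3364822; 3259922; -4949080; 7116658; -9615106; 10439190; -10864864; 15349274; -15611364; 18211774; -15974174; 21900198; -20148348; 22151580; -18663632; 23133614; -20532520; 20044472; -15173494; 18091374; -12518538; 11609196; -2231418; 6693618; 4922486; -2682588; 17827938; -9141462; 26075012; -18489488; 36478480; -22545550; 41095820; -27348162; 44138964; -25475262; 42217226; -23827840; 36163012; -16691650; 28695848; -11026554; 16444796; -2435346; 8428360; 3248072; -3761544; 9497944; -6724056; 11883672; -13740642; 13478298; -10334930; 11132338; -11787928; 8906692; -6102286; 4307900; -5090308; 3300036; -3056606; 1355572; -2525184; 5977062; -7762714; 7337406; -7786650; 15344580; -18961278; 14221014; -16263286; 19426632; -28170514; 10729182; -19611412; 11347106; -28247930; -2860006; -15305082; -2434994; -21506132; -15918926; -9567302; -11188396; -16263106; -20045418; -8730572; -10994622; -16490242; -15713806; -12044018; -5716026; -19033314; -8639448; -13892406; -617024; -18053218; -3209396; -9700706; 2305354; -10870268; -283642; -1030332; 4015808; -1551232; 1926468; 4660944;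 7540548; 3013364; 7171846; 2278434; 15781558; 1598680; 16298388; -4599708; 24933366; -480000; 21423874; -8721814; 24079906; 416486; 12754452; -8039004; 8927510; 1720766; -6069390; -6295304; -8020284; -1306352; -18568286; -7771740; -10697952; -10405362; -15954836; -13385740; 221278; -22185222; -7767280; -18775960; 10016106; -28298534; -6991530; -16270500; 9968284; -22008312; -13974070; -4141552; 4111544; -7720242; -20621334; 8152496; -704430; 1771092; -21273148; 10022934; -1106174; 274022; -14076834; 2888640; 4497016; -5083496; 152704; -2387290; 14298020; -3726670; 15209850; 1849668; 21234938; 7187808; 22266396; 13758260; 19747104; 21900100; 19150276; 25756116; 12463414; 32325360; 11135248; 31256848; 4435654; 34080610; 1548854; 28897184; -4320774; 28578168; -10333272; 21884274; -14246616; 19653882; -21710102; 12925712; -20043756; 8461678; -25670786; 1445552; -15994108; -6037788; -19540486; -12735022; -3100906; -22173546; -7376108; -26019760; 13095770; -35457008; 5328274; -34432646; 27630546; -43167406; 14620376; -36962484; 36160626; -44521588; 16449954; -33030856; 34067502; -37735470; 8168478; -21340174; 21025582; -22204632; -6142388; -4329836; 4475262; -3593090; -17223514; 9524650; -6798772; 8518576; -19579460; 12896838; -10163148; 9939062; -14512406; 6780204; -7568562; 4017316; -5219984; -3523632; -732440; -5329170; 6343616; -14848824; 9061782; -15913246; 17881890; -24374862; 18495180; -23399718; 24764554; -26787266; 21743218; -21821906; 21680152; -17915232; 14649850; -9156812; 8216400; 251740; 339044; 9327956; -8159960; 18866552; -11819338; 22914838; -17447390; 26787584; -13848900; 22513046;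 -14516260; 19087500; -4423048; 8534704; -1777396; 1683488; 10449274; -9128398; 11796422; -13618810; 20297260; -19546756; 16206748; -18683244; 18304664; -18716894; 9626714; -13698606; 8436576; -10570452; 241410; -5073148; 449688; -2551202; -3987546; 405354; -1454012; 533098; -3092588; 812610; -84628; -320612; -797146; -725198; 1545304; -1303584; 1049088; -1144868; 2526432; -933784; 1942734; -555376; 2501544; -298188; 1677250; -248420; 1555704; -266066; 723722; -462256; 424656; -549822; -120654; -712970; -299412; -715108; -530820; -755466; -559414; -673862; -584214; -623094; -523150; -511186; -456652; -427678; -370588; -327382; -288360; -249842; -214378; -177684; -149792; -121268; -99342; -76616; -59068; -43128; -31926; -21698; -14010; -8244; -4840; -2258; -566; 314; 564; 624; 564; 408; 256; 140; 58; 12; 0; -4; -4; -2].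

Definition Q6_0 : list Z :=
  [:: 3; 2; -1; -3; -2; 2; 3; 0; -2; -1; 0; 1; 1].

Definition Rem6_0 : list Z :=
  [:: -3].

Definition Q6_1 : list Z :=
  [:: -1; 1; 2; 1; -1; -1; 0; 2; 1; -1; -1; -2; 1; 2; 1; 0; -2; -2; -1; 1; 2; 1].

Definition Rem6_1 : list Z :=
  [:: 0; -3].

Definition Q6_2 : list Z :=
  [:: 2; -2; -4; -2; 1; 4; 3; 0; -2; -2; -2; 0; 3; 3; 1; -4; -3; 0; 3; 2; -1; -1; 0; 0; -1; -1; -1; 1; 2; 1].

Definition Rem6_2 : list Z :=
  [:: -3; 3].

Definition fac1 := umul (upow [:: 0; 1] 38) (umul (upow [:: -1; 1] 6) (upow [:: 1; 1] 2)).
Definition fac2 := umul (upow [:: 0; 1] 24) (umul (upow [:: -1; 1] 2) (upow [:: 1; 1] 2)).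
Definition fac3 := umul (upow [:: 0; 1] 38) (umul (upow [:: -1; 1] 8)
   (umul (upow [:: 1; 1] 8) (upow [:: 1; -1; 1] 2))).
Definition bchk A B sx kx sy ky fac H :=
  bzero (badd (badd (bmul A Rd) (bmul B (bsubst sx kx sy ky Rd))) (bneg [:: umul fac H])).
Definition mchk U V W H s k :=
  uzero (uadd (uadd (umul U H) (umul V (usubst s k H))) (uneg (uadd [:: 1] (umul [:: 7] W)))).
Definition phi6 := [:: 1; -1; 1].
Definition chk6 (j : nat) Q Rm := uzero (uadd (flat (2 * j)%N Rd) (uneg (uadd (umul Q phi6) Rm))).
End Data.

Lemma chk1 : bchk A1 B1 (Zpos xH) 2 (Zpos xH) 2 fac1 H1. Proof. by vm_compute. Qed.
Lemma chk2 : bchk A2 B2 (Zneg xH) 1 (Zpos xH) 1 fac2 (usubst (Zpos xH) 2 Ld). Proof. by vm_compute. Qed.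
Lemma chk3 : bchk A3 B3 (Zneg xH) 2 (Zpos xH) 2 fac3 H3. Proof. by vm_compute. Qed.
Lemma mchk1 : mchk U1 V1 W1 H1 (Zpos xH) 2. Proof. by vm_compute. Qed.
Lemma mchka : mchk Ua Va Wa Ld (Zneg xH) 1. Proof. by vm_compute. Qed.
Lemma mchkb : mchk Ub Vb Wb Ld (Zneg xH) 2. Proof. by vm_compute. Qed.
Lemma mchk3 : mchk U3 V3 W3 H3 (Zneg xH) 2. Proof. by vm_compute. Qed.

Lemma chk6_0 : chk6 0 Q6_0 Rem6_0. Proof. by vm_compute. Qed.
Lemma chk6_1 : chk6 1%N Q6_1 Rem6_1. Proof. by vm_compute. Qed.
Lemma chk6_2 : chk6 2%N Q6_2 Rem6_2. Proof. by vm_compute. Qed.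
Lemma ev1_Aint l (x : algC) : x \in Aint -> ev1 l x \in Aint.
Proof.
move=> Ax; elim: l => [|c l IH] /=; first exact: rpred0.
by rewrite rpredD ?rpredM // /z2r Aint_int.
Qed.

Lemma no7 (w : algC) : w \in Aint -> 1 + 7%:R * w = 0 -> False.
Proof.
move=> Aw H.
have Ew : w = - (7%:R)^-1.
  apply: (mulfI (x := 7%:R)); first by rewrite pnatr_eq0.
  by rewrite mulrN divff ?pnatr_eq0 //; apply/eqP; rewrite -addr_eq0 addrC H.
have : w \in Num.int.
  apply: Cint_rat_Aint => //; rewrite Ew rpredN rpredV; exact: rpred_nat.
move/intrP=> [m Em]; move: H; rewrite Em -(intrM _ 7) -(intrD _ 1) => /eqP.
rewrite intr_eq0 => /eqP; lia.
Qed.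
Lemma bcert_use A B sx kx sy ky fac H (x y : algC) :
  bchk A B sx kx sy ky fac H -> (0 < kx)%N -> (0 < ky)%N ->
  ev2 Rd x y = 0 -> ev2 Rd (z2r sx * x ^+ kx) (z2r sy * y ^+ ky) = 0 ->
  ev1 fac x * ev1 H x = 0.
Proof.
move=> /(ev2_zero x y) + kx0 ky0 E1 E2.
rewrite !ev2_add !ev2_mul ev2_neg ev2_subst // E1 E2 !mulr0 !add0r.
by rewrite /ev2 /= mulr0 addr0 ev1_mul => /eqP; rewrite oppr_eq0 => /eqP.
Qed.

Lemma mcert_use U V W H s k (x : algC) :
  mchk U V W H s k -> (0 < k)%N -> x \in Aint ->
  ev1 H x = 0 -> ev1 H (z2r s * x ^+ k) = 0 -> False.
Proof.
move=> /(ev1_zero x) + k0 Ax E1 E2.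
rewrite !ev1_add !ev1_mul ev1_subst // E1 E2 !mulr0 !add0r ev1_neg ev1_add ev1_mul.
move/eqP; rewrite oppr_eq0 => /eqP.
have -> : ev1 [:: Zpos xH] x = 1 by rewrite /ev1 /= mulr0 addr0.
have -> : ev1 [:: Zpos 7%positive] x = 7%:R by rewrite /ev1 /= mulr0 addr0.
apply: no7; exact: ev1_Aint.
Qed.

Lemma z2r_m1 (R : comNzRingType) : z2r (Zneg xH) = - 1 :> R.
Proof. by rewrite /z2r /= NegzE. Qed.
Lemma z2r_m2 (R : comNzRingType) : z2r (Zneg 2) = - 2%:R :> R.
Proof. by rewrite /z2r /= NegzE. Qed.
Lemma z2r_2 (R : comNzRingType) : z2r (Zpos 2) = 2%:R :> R.
Proof. by []. Qed.
Lemma z2r_1 (R : comNzRingType) : z2r (Zpos 1) = 1 :> R.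
Proof. by []. Qed.

Definition Rexp (x y : algC) :=
  x^+15 * y^+4 + x^+14 * y^+4 + x^+11 * y^+4 - x^+10 * y^+4 - x^+8 * y^+4
  + 2%:R * x^+9 * y^+3 - x^+15 * y^+2 - x^+11 * y^+2 - x^+9 * y^+2
  + 2%:R * x^+8 * y^+2 - 2%:R * x^+7 * y^+2 + x^+6 * y^+2 + x^+4 * y^+2
  + y^+2 - 2%:R * x^+6 * y + x^+7 + x^+5 - x^+4 - x - 1.

Lemma evRd (x y : algC) : ev2 Rd x y = Rexp x y.
Proof.
rewrite /ev2 /ev1 /Rexp /= ?z2r_m1 ?z2r_m2 ?z2r_2 ?z2r_1 ?z2r0.
ring.
Qed.

Section PE.
Variable x : algC.
Definition pe (p : {poly int}) := (map_poly (intr : int -> algC) p).[x].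
Lemma peD p q : pe (p + q) = pe p + pe q. Proof. by rewrite /pe rmorphD hornerD. Qed.
Lemma peB p q : pe (p - q) = pe p - pe q. Proof. by rewrite /pe rmorphB hornerD hornerN. Qed.
Lemma peN p : pe (- p) = - pe p. Proof. by rewrite /pe rmorphN hornerN. Qed.
Lemma peM p q : pe (p * q) = pe p * pe q. Proof. by rewrite /pe rmorphM hornerM. Qed.
Lemma peXn n : pe 'X^n = x ^+ n. Proof. by rewrite /pe map_polyXn hornerXn. Qed.
Lemma peX : pe 'X = x. Proof. by rewrite /pe map_polyX hornerX. Qed.
Lemma pe1 : pe 1 = 1. Proof. by rewrite /pe rmorph1 hornerC. Qed.
Lemma peC c : pe c%:P = c%:~R. Proof. by rewrite /pe map_polyC hornerC. Qed.
End PE.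

Lemma evR (t : nat) (x : algC) :
  (map_poly intr (Rpoly t)).[x] = ev2 Rd x (x ^+ (2 * t)%N).
Proof.
have -> : x ^+ (2 * t)%N = (x ^+ t) ^+ 2 by rewrite mulnC exprM.
rewrite evRd -/(pe x _) /Rpoly.
rewrite !(peD, peB, peN, peM, peXn, peX, pe1, peC).
have D' : forall a b : nat, x ^+ (a + b)%R = x ^+ a * x ^+ b by move=> a b; rewrite -exprD.
rewrite !D' /Rexp; set u := x ^+ t.
ring.
Qed.

Lemma vanish b t (w : algC) : 'Phi_b %| Rpoly t -> b.-primitive_root w ->
  ev2 Rd w (w ^+ (2 * t)%N) = 0.
Proof.
rewrite (Pdiv.IdomainMonic.dvdp_eq (Cyclotomic_monic b)) => /eqP E pw.
rewrite -evR -/(pe w _) E peM {2}/pe (Cintr_Cyclotomic pw).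
have : root (cyclotomic w b) w by rewrite root_cyclotomic.
by move/eqP ->; rewrite mulr0.
Qed.

Lemma coprime_aux k b c e : odd k -> (c * k = b + 2 ^ e)%N -> coprime k b.
Proof.
move=> ok E; rewrite /coprime; set g := gcdn k b.
have gk : (g %| k)%N by exact: dvdn_gcdl.
have gb : (g %| b)%N by exact: dvdn_gcdr.
have g2 : (g %| 2 ^ e)%N.
  by rewrite -(dvdn_addr _ gb) -E dvdn_mull.
have : coprime k (2 ^ e) by rewrite coprimeXr // coprimen2.
by rewrite /coprime => /eqP C; rewrite -dvdn1 -C dvdn_gcd gk g2.
Qed.

Section Prim.
Variables (b : nat) (w : algC).
Hypotheses (b3 : (3 <= b)%N) (pw : b.-primitive_root w).

Lemma w_neq0 : w != 0.
Proof.
apply/eqP => w0; have := prim_expr_order pw; rewrite w0 expr0n.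
by case: b b3 => // n _ /eqP; rewrite eq_sym oner_eq0.
Qed.
Lemma w_neq1 : w != 1.
Proof.
apply/eqP => w1; have := prim_order_dvd pw 1; rewrite w1 expr1 eqxx.
by move/dvdn_leq => /(_ isT); lia.
Qed.
Lemma w_neqm1 : w != -1.
Proof.
apply/eqP => w1; have := prim_order_dvd pw 2; rewrite w1 sqrrN expr1n eqxx.
by move/dvdn_leq => /(_ isT); lia.
Qed.
Lemma w_half h : b = (2 * h)%N -> w ^+ h = -1.
Proof.
move=> bh.
have h1 : w ^+ h != 1.
  by rewrite -(prim_order_dvd pw); apply/negP => /dvdn_leq; lia.
have : (w ^+ h - 1) * (w ^+ h + 1) = 0.
  by rewrite -subr_sqr expr1n -exprM mulnC -bh prim_expr_order // subrr.
move/eqP; rewrite mulf_eq0 subr_eq0 (negPf h1) /= addr_eq0 => /eqP //.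
Qed.
Lemma w_pow k : coprime k b -> b.-primitive_root (w ^+ k).
Proof. by move=> ck; rewrite prim_root_exp_coprime. Qed.
Lemma w_exp_mod n : w ^+ n = w ^+ (n %% b).
Proof.
by rewrite {1}(divn_eq n b) exprD [X in w ^+ X * _]mulnC exprM (prim_expr_order pw) expr1n mul1r.
Qed.
End Prim.

Lemma ev1_c (R : comNzRingType) (x : R) c : ev1 [:: c] x = z2r c.
Proof. by rewrite /ev1 /= mulr0 addr0. Qed.
Lemma ev1_lin (R : comNzRingType) (x : R) c d : ev1 [:: c; d] x = z2r c + x * z2r d.
Proof. by rewrite /ev1 /= mulr0 addr0. Qed.

Lemma ev2_flat (R : comNzRingType) k F (x : R) : ev2 F x (x ^+ k) = ev1 (flat k F) x.
Proof.
elim: F => [|r F IH] //=.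
by rewrite ev1_add /ev1 ev_nseq // IH.
Qed.

Lemma ev1_3 (x : algC) a c d : ev1 [:: a; c; d] x = z2r a + x * (z2r c + x * z2r d).
Proof. by rewrite /ev1 /= mulr0 addr0. Qed.

Lemma fac_nz b (w : algC) : (3 <= b)%N -> b.-primitive_root w ->
  [/\ ev1 [:: Z0; Zpos xH] w != 0, ev1 [:: Zneg xH; Zpos xH] w != 0
    & ev1 [:: Zpos xH; Zpos xH] w != 0].
Proof.
move=> b3 pw; rewrite !ev1_lin z2r0 z2r_m1 z2r_1 !mulr1 add0r; split.
- exact: w_neq0 b3 pw.
- by rewrite addrC subr_eq0 (w_neq1 b3 pw).
- by rewrite addrC addr_eq0 (w_neqm1 b3 pw).
Qed.

Theorem mainTheorem5 (t b : nat) : (3 <= b)%N -> ~~ ('Phi_b %| Rpoly t).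
Proof.
move=> b3; apply/negP => dv.
have b0 : (0 < b)%N by lia.
have [z pz] := C_prim_root_exists b0.
have RZ : forall w : algC, b.-primitive_root w -> ev2 Rd w (w ^+ (2 * t)%N) = 0.
  by move=> w pw; exact: vanish dv pw.
have Az : z \in Aint := Aint_prim_root pz.
case: (boolP (odd b)) => ob.
  have H1z : forall w : algC, b.-primitive_root w -> ev1 H1 w = 0.
    move=> w pw.
    have pw2 : b.-primitive_root (w ^+ 2) by apply: w_pow => //; rewrite coprime2n.
    have E2 : ev2 Rd (z2r (Zpos xH) * w ^+ 2) (z2r (Zpos xH) * (w ^+ (2 * t)%N) ^+ 2) = 0.
      by rewrite z2r_1 !mul1r exprAC; exact: RZ _ pw2.
    have := bcert_use chk1 isT isT (RZ w pw) E2.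
    have [n0 n1 n2] := fac_nz b3 pw.
    move/eqP; rewrite mulf_eq0 => /orP [F|/eqP //]; exfalso; move: F; apply/negP.
    by rewrite /fac1 ev1_mul ev1_pow ev1_mul ev1_pow ev1_pow !mulf_neq0 ?expf_neq0.
  apply: (mcert_use mchk1 isT Az (H1z z pz)).
  by rewrite z2r_1 mul1r; apply: H1z; apply: w_pow => //; rewrite coprime2n.
have bh : b = (2 * b./2)%N.
  by rewrite -{1}(odd_double_half b) (negPf ob) add0n -mul2n.
set h := b./2 in bh.
case: (boolP (odd h)) => oh.
  have h2 : h != 2%N by apply/eqP => h2; rewrite h2 in oh.
  have z3 : z ^+ h = -1 := w_half b3 pz bh.
  case: (eqVneq h 3%N) => [h3e | hn3].
    have b6 : b = 6%N by rewrite bh h3e.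
    rewrite h3e in z3.
    have p6z : z2r (Zpos xH) + z * (z2r (Zneg xH) + z * z2r (Zpos xH)) = 0.
      rewrite z2r_1 z2r_m1 mulr1.
      have : (z + 1) * (1 + z * (-1 + z)) = 0.
        have -> : (z + 1) * (1 + z * (-1 + z)) = z ^+ 3 + 1 by ring.
        by rewrite z3 addNr.
      move/eqP; rewrite mulf_eq0 => /orP [|/eqP //].
      by rewrite addr_eq0 (negPf (w_neqm1 b3 pz)).
    have E := RZ z pz; rewrite (w_exp_mod pz (2 * t)%N) in E.
    have e6 : ((2 * t) %% b = 2 * (t %% 3))%N by rewrite b6; lia.
    rewrite e6 in E.
    rewrite ev2_flat in E.
    have : (t %% 3 < 3)%N by rewrite ltn_mod.
    case: (t %% 3)%N E => [|[|[|k]]] E _ //.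
    - have C := ev1_zero z chk6_0.
      rewrite ev1_add E add0r ev1_neg ev1_add ev1_mul /phi6 ev1_3 p6z mulr0 ?add0r ?sub0r in C.
      move/eqP: C; rewrite oppr_eq0 /Rem6_0 ev1_c /z2r intr_eq0 //.
    - have C := ev1_zero z chk6_1.
      rewrite ev1_add E add0r ev1_neg ev1_add ev1_mul /phi6 ev1_3 p6z mulr0 ?add0r ?sub0r in C.
      move/eqP: C; rewrite oppr_eq0 /Rem6_1 ev1_lin z2r0 add0r mulf_eq0 (negPf (w_neq0 b3 pz)) /=.
      by rewrite /z2r intr_eq0.
    - have C := ev1_zero z chk6_2.
      rewrite ev1_add E add0r ev1_neg ev1_add ev1_mul /phi6 ev1_3 p6z mulr0 ?add0r ?sub0r in C.
      move/eqP: C; rewrite oppr_eq0 /Rem6_2 ev1_lin.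
      have -> : z2r (Zneg 3) = - z2r (Zpos 3) :> algC by rewrite /z2r /= NegzE mulrNz.
      have -> : - z2r (Zpos 3) + z * z2r (Zpos 3) = z2r (Zpos 3) * (z - 1) :> algC by ring.
      rewrite mulf_eq0 subr_eq0 (negPf (w_neq1 b3 pz)) orbF.
      by rewrite /z2r intr_eq0.
  have h5 : (5 <= h)%N.
    have h4 : h != 4%N by apply/eqP => h4; rewrite h4 in oh.
    have hn1 : h != 1%N by apply/eqP => h1; rewrite h1 in bh; lia.
    move/eqP: h2 => h2; move/eqP: h4 => h4; move/eqP: hn3 => hn3; move/eqP: hn1 => hn1.
    lia.
  have ck : coprime (h + 2) b.
    apply: (@coprime_aux _ _ 2 2); first by rewrite addn2 /= negbK oh.
    rewrite bh; lia.
  have Ew : forall w : algC, b.-primitive_root w -> w ^+ (h + 2) = - w ^+ 2.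
    by move=> w pw; rewrite exprD (w_half b3 pw bh) mulN1r.
  have H3z : forall w : algC, b.-primitive_root w -> ev1 H3 w = 0.
    move=> w pw.
    have E2 : ev2 Rd (z2r (Zneg xH) * w ^+ 2) (z2r (Zpos xH) * (w ^+ (2 * t)%N) ^+ 2) = 0.
      rewrite z2r_m1 z2r_1 mulN1r mul1r -(Ew w pw).
      have -> : (w ^+ (2 * t)%N) ^+ 2 = (w ^+ (h + 2)) ^+ (2 * t)%N.
        by rewrite (Ew w pw) [RHS]exprM sqrrN -!exprM; congr (_ ^+ _); lia.
      exact: RZ _ (w_pow pw ck).
    have := bcert_use chk3 isT isT (RZ w pw) E2.
    have [n0 n1 n2] := fac_nz b3 pw.
    have n3 : ev1 [:: Zpos xH; Zneg xH; Zpos xH] w != 0.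
      rewrite ev1_3 z2r_1 z2r_m1 mulr1; apply/eqP => P.
      have w3 : w ^+ 3 = -1.
        apply/eqP; rewrite -addr_eq0.
        have -> : w ^+ 3 + 1 = (w + 1) * (1 + w * (-1 + w)) by ring.
        by rewrite P mulr0.
      have : w ^+ 6 = 1 by rewrite (_ : 6 = 3 * 2)%N // exprM w3 sqrrN expr1n.
      move/eqP; rewrite -(prim_order_dvd pw) => /(dvdn_leq (isT : (0 < 6)%N)); lia.
    move/eqP; rewrite mulf_eq0 => /orP [F|/eqP //]; exfalso; move: F; apply/negP.
    by rewrite /fac3 ev1_mul ev1_pow ev1_mul ev1_pow ev1_mul ev1_pow ev1_pow !mulf_neq0 ?expf_neq0.
  apply: (mcert_use mchk3 isT Az (H3z z pz)).
  rewrite z2r_m1 mulN1r -(Ew z pz).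
  exact: H3z _ (w_pow pz ck).
(* 4 | b *)
have Lz : forall w : algC, b.-primitive_root w -> ev1 Ld (w ^+ 2) = 0.
  move=> w pw.
  have ck : coprime (h + 1) b.
    apply: (@coprime_aux _ _ 2 1); first by rewrite addn1 /= oh.
    by rewrite bh expn1 mulnDr muln1.
  have Ew : w ^+ (h + 1) = - w by rewrite exprD (w_half b3 pw bh) expr1 mulN1r.
  have E2 : ev2 Rd (z2r (Zneg xH) * w ^+ 1) (z2r (Zpos xH) * (w ^+ (2 * t)%N) ^+ 1) = 0.
    rewrite z2r_m1 z2r_1 !expr1 mulN1r mul1r -Ew.
    have -> : w ^+ (2 * t)%N = (w ^+ (h + 1)) ^+ (2 * t)%N by rewrite Ew [RHS]exprM sqrrN -exprM.
    exact: RZ _ (w_pow pw ck).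
  have := bcert_use chk2 isT isT (RZ w pw) E2.
  have [n0 n1 n2] := fac_nz b3 pw.
  move/eqP; rewrite mulf_eq0 => /orP [F|/eqP]; last first.
    by rewrite ev1_subst // z2r_1 mul1r.
  exfalso; move: F; apply/negP.
  by rewrite /fac2 ev1_mul ev1_pow ev1_mul ev1_pow ev1_pow !mulf_neq0 ?expf_neq0.
have Az2 : z ^+ 2 \in Aint by rewrite rpredX.
have hm : h = (2 * h./2)%N by rewrite -{1}(odd_double_half h) (negPf oh) add0n -mul2n.
set m := h./2 in hm.
case: (boolP (odd m)) => om.
  have ck : coprime (m + 2) b.
    apply: (@coprime_aux _ _ 4 3); first by rewrite addn2 /= negbK om.
    rewrite bh hm; lia.
  apply: (mcert_use mchkb isT Az2 (Lz z pz)).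
  rewrite z2r_m1 mulN1r.
  have -> : - (z ^+ 2) ^+ 2 = (z ^+ (m + 2)) ^+ 2.
    rewrite -mulN1r -(w_half b3 pz bh) -!exprM -exprD; congr (_ ^+ _); lia.
  exact: Lz _ (w_pow pz ck).
have ck : coprime (m + 1) b.
  apply: (@coprime_aux _ _ 4 2); first by rewrite addn1 /= om.
  rewrite bh hm; lia.
apply: (mcert_use mchka isT Az2 (Lz z pz)).
rewrite z2r_m1 mulN1r expr1.
have -> : - (z ^+ 2) = (z ^+ (m + 1)) ^+ 2.
  rewrite -mulN1r -(w_half b3 pz bh) -!exprM -exprD; congr (_ ^+ _); lia.
exact: Lz _ (w_pow pz ck).
Qed.
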